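(* Let $a\in\mathbb D$ and $0\le\gamma<2\pi$, and put $a'=|1+a|-1$ and $\gamma_a=\arg(1+\overline a)$. Let $f=h+\overline g\in\mathcal S(H^a_\gamma)$ and assume $g'(0)=a'e^{2i(\gamma+\gamma_a)}$. Then $a'\in(-1,1)$, $|g'(0)|<1$, and for all $z\in\mathbb D$ $$h(z)+e^{-2i(\gamma+\gamma_a)}g(z)=\frac{(1+a')z}{1-e^{i(\gamma+\gamma_a)}z}.$$
   Context: $\mathbb D$ is the open unit disk. A harmonic map $f$ on $\mathbb D$ is written canonically as $f=h+\overline g$ with $h,g$ analytic in $\mathbb D$ and $g(0)=0$. $\mathcal H$ is the set of such $f$ with $h(0)=g(0)=0$ and $h'(0)=1$. $f$ is sense-preserving if $|h'(z)|>|g'(z)|$ on $\mathbb D$. $\mathcal S_H$ is the set of sense-preserving univalent $f\in\mathcal H$. For $a\in\mathbb D$ and $0\le\gamma<2\pi$, $H^a_\gamma=\{w\in\mathbb C:\ \mathrm{Re}\big(\tfrac{e^{i\gamma}}{1+a}w\big)>-\tfrac12\}$ and $\mathcal S(H^a_\gamma)$ denotes the set of $f\in\mathcal S_H$ with $f(\mathbb D)=H^a_\gamma$ (slanted half-plane mappings). Here $\gamma_a=\arg(1+\overline a)$, so $1+a=|1+a|e^{-i\gamma_a}$. *)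

(* Defs.v *)
From Stdlib Require Import Reals.
Open Scope R_scope.

Definition Cplx : Type := (R * R)%type.
Definition Re (z : Cplx) : R := fst z.
Definition Im (z : Cplx) : R := snd z.
Definition RtoC (x : R) : Cplx := (x, 0).
Definition Czero : Cplx := (0, 0).
Definition Cone : Cplx := (1, 0).
Definition Cadd (z w : Cplx) : Cplx := (Re z + Re w, Im z + Im w).
Definition Copp (z : Cplx) : Cplx := (- Re z, - Im z).
Definition Csub (z w : Cplx) : Cplx := Cadd z (Copp w).
Definition Cmul (z w : Cplx) : Cplx :=
  (Re z * Re w - Im z * Im w, Re z * Im w + Im z * Re w).
Definition Cconj (z : Cplx) : Cplx := (Re z, - Im z).
Definition Cmod (z : Cplx) : R := sqrt (Re z * Re z + Im z * Im z).
Definition Cinv (z : Cplx) : Cplx :=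
  (Re z / (Re z * Re z + Im z * Im z), - Im z / (Re z * Re z + Im z * Im z)).
Definition Cdiv (z w : Cplx) : Cplx := Cmul z (Cinv w).
Definition Cexpi (t : R) : Cplx := (cos t, sin t).

Definition inD (z : Cplx) : Prop := Cmod z < 1.

Definition has_cderiv (f : Cplx -> Cplx) (z l : Cplx) : Prop :=
  forall eps : R, 0 < eps -> exists delta : R, 0 < delta /\
    forall w : Cplx, 0 < Cmod w < delta ->
      Cmod (Csub (Cdiv (Csub (f (Cadd z w)) (f z)) w) l) < eps.

Definition harm (h g : Cplx -> Cplx) (z : Cplx) : Cplx := Cadd (h z) (Cconj (g z)).

(* f = h + conj g belongs to S_H, given the (complex) derivatives h', g' of
   the analytic functions h, g on D *)
Definition in_SH (h h' g g' : Cplx -> Cplx) : Prop :=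
  (forall z, inD z -> has_cderiv h z (h' z)) /\
  (forall z, inD z -> has_cderiv g z (g' z)) /\
  h Czero = Czero /\ g Czero = Czero /\ h' Czero = Cone /\
  (forall z, inD z -> Cmod (g' z) < Cmod (h' z)) /\
  (forall z1 z2, inD z1 -> inD z2 -> harm h g z1 = harm h g z2 -> z1 = z2).

Definition in_Hag (a : Cplx) (gamma : R) (w : Cplx) : Prop :=
  Re (Cmul (Cdiv (Cexpi gamma) (Cadd Cone a)) w) > - (1/2).

Definition maps_onto_Hag (h g : Cplx -> Cplx) (a : Cplx) (gamma : R) : Prop :=
  forall w, (exists z, inD z /\ harm h g z = w) <-> in_Hag a gamma w.

(* e^{i gamma_a} with gamma_a = arg(1 + conj a), i.e. (1 + conj a)/|1 + conj a| *)
Definition expi_gamma_a (a : Cplx) : Cplx :=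
  Cdiv (Cadd Cone (Cconj a)) (RtoC (Cmod (Cadd Cone (Cconj a)))).

Definition aprime (a : Cplx) : R := Cmod (Cadd Cone a) - 1.

(* Main.v *)
From Coquelicot Require Import Coquelicot.
From Stdlib Require Import Reals Lra Psatz Ring Arith Lia.
Require Import Defs.
Open Scope R_scope.

Ltac cunf := unfold Csub, Cdiv, Cadd, Copp, Cmul, Cconj, Cinv, RtoC, Czero, Cone, Cexpi in *; unfold Re, Im in *.

Lemma cext : forall z w : Cplx, fst z = fst w -> snd z = snd w -> z = w.
Proof. intros [a b] [c d]; simpl; intros -> ->; reflexivity. Qed.

Ltac ceq := apply cext; cunf; simpl.

Lemma Cmod_ge0 z : 0 <= Cmod z.
Proof. apply sqrt_pos. Qed.

Lemma Cmod_sq z : Cmod z * Cmod z = Re z * Re z + Im z * Im z.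
Proof. unfold Cmod; apply sqrt_sqrt; nra. Qed.

Lemma Cmod_eq z r : 0 <= r -> r * r = Re z * Re z + Im z * Im z -> Cmod z = r.
Proof. intros H1 H2; unfold Cmod; rewrite <- H2; apply sqrt_square; auto. Qed.

Lemma Cmod_mul z w : Cmod (Cmul z w) = Cmod z * Cmod w.
Proof.
  apply Cmod_eq. apply Rmult_le_pos; apply Cmod_ge0.
  replace (Cmod z * Cmod w * (Cmod z * Cmod w)) with ((Cmod z * Cmod z) * (Cmod w * Cmod w)) by ring.
  rewrite !Cmod_sq; destruct z, w; cunf; simpl; ring.
Qed.

Lemma sq_le_sq_le x y : 0 <= y -> x * x <= y * y -> x <= y.
Proof. intros; nra. Qed.


Lemma Rabs_Re_le z : Rabs (Re z) <= Cmod z.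
Proof.
  apply sq_le_sq_le. apply Cmod_ge0. rewrite Cmod_sq.
  rewrite <- Rabs_mult, Rabs_right by nra. nra.
Qed.

Lemma Rabs_Im_le z : Rabs (Im z) <= Cmod z.
Proof.
  apply sq_le_sq_le. apply Cmod_ge0. rewrite Cmod_sq.
  rewrite <- Rabs_mult, Rabs_right by nra. nra.
Qed.

Lemma Re_le z : Re z <= Cmod z.
Proof. pose proof (Rabs_Re_le z); pose proof (Rle_abs (Re z)); lra. Qed.

Lemma Cmod_le_sum z : Cmod z <= Rabs (Re z) + Rabs (Im z).
Proof.
  apply sq_le_sq_le. pose proof (Rabs_pos (Re z)); pose proof (Rabs_pos (Im z)); lra.
  rewrite Cmod_sq. pose proof (Rabs_pos (Re z)); pose proof (Rabs_pos (Im z)).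
  replace (Re z * Re z) with (Rabs (Re z) * Rabs (Re z)) by (rewrite <- Rabs_mult; apply Rabs_right; nra).
  replace (Im z * Im z) with (Rabs (Im z) * Rabs (Im z)) by (rewrite <- Rabs_mult; apply Rabs_right; nra).
  nra.
Qed.

Lemma Cmod_tri z w : Cmod (Cadd z w) <= Cmod z + Cmod w.
Proof.
  apply sq_le_sq_le. pose proof (Cmod_ge0 z); pose proof (Cmod_ge0 w); lra.
  rewrite Cmod_sq.
  assert (H: Re z * Re w + Im z * Im w <= Cmod z * Cmod w).
  { destruct (Rle_dec (Re z * Re w + Im z * Im w) 0) as [h|h].
    pose proof (Cmod_ge0 z); pose proof (Cmod_ge0 w); nra.
    apply sq_le_sq_le. pose proof (Cmod_ge0 z); pose proof (Cmod_ge0 w); nra.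
    replace (Cmod z * Cmod w * (Cmod z * Cmod w)) with ((Cmod z * Cmod z) * (Cmod w * Cmod w)) by ring.
    rewrite !Cmod_sq. pose proof (pow2_ge_0 (Re z * Im w - Im z * Re w)). nra. }
  replace ((Cmod z + Cmod w) * (Cmod z + Cmod w)) with (Cmod z * Cmod z + Cmod w * Cmod w + 2 * (Cmod z * Cmod w)) by ring.
  rewrite !Cmod_sq. destruct z, w; cunf; simpl in *. nra.
Qed.

Lemma Cmod_opp z : Cmod (Copp z) = Cmod z.
Proof. unfold Cmod; cunf; simpl; apply f_equal; ring. Qed.

Lemma Cmod_sub_sym z w : Cmod (Csub z w) = Cmod (Csub w z).
Proof. unfold Cmod; cunf; simpl; apply f_equal; ring. Qed.

Lemma Cmod_zero : Cmod Czero = 0.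
Proof. unfold Cmod; cunf; simpl. replace (0*0+0*0) with 0 by ring. apply sqrt_0. Qed.

Lemma Cmod_one : Cmod Cone = 1.
Proof. apply Cmod_eq; cunf; simpl; lra. Qed.

Lemma Cmod_eq0 z : Cmod z = 0 -> z = Czero.
Proof.
  intros H. assert (Re z * Re z + Im z * Im z = 0) by (rewrite <- Cmod_sq, H; ring).
  destruct z; cunf; simpl in *. apply cext; simpl; nra.
Qed.

Lemma Cmod_pos z : z <> Czero -> 0 < Cmod z.
Proof. intros H. destruct (Cmod_ge0 z) as [h|h]; auto. symmetry in h; apply Cmod_eq0 in h; contradiction. Qed.

Lemma Cnz_sq z : z <> Czero -> Re z * Re z + Im z * Im z <> 0.
Proof. intros H h. apply H. apply Cmod_eq0. unfold Cmod; rewrite h; apply sqrt_0. Qed.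

Lemma Cinv_l z : z <> Czero -> Cmul (Cinv z) z = Cone.
Proof. intros H; pose proof (Cnz_sq z H). destruct z; cunf; simpl in *; apply cext; simpl; field; auto. Qed.

Lemma Cinv_r z : z <> Czero -> Cmul z (Cinv z) = Cone.
Proof. intros H; pose proof (Cnz_sq z H). destruct z; cunf; simpl in *; apply cext; simpl; field; auto. Qed.

Lemma Cmod_inv z : z <> Czero -> Cmod (Cinv z) = / Cmod z.
Proof.
  intros H. pose proof (Cmod_pos z H).
  assert (Cmod (Cinv z) * Cmod z = 1) by (rewrite <- Cmod_mul, Cinv_l; [apply Cmod_one|auto]).
  field_simplify_eq; [|lra]. lra.
Qed.

Lemma Cmod_div z w : w <> Czero -> Cmod (Cdiv z w) = Cmod z / Cmod w.
Proof. intros H; unfold Cdiv; rewrite Cmod_mul, Cmod_inv; auto. Qed.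

Lemma Cmod_conj z : Cmod (Cconj z) = Cmod z.
Proof. unfold Cmod; cunf; simpl; apply f_equal; ring. Qed.

Lemma Cmod_RtoC r : Cmod (RtoC r) = Rabs r.
Proof. apply Cmod_eq. apply Rabs_pos. cunf; simpl. rewrite <- Rabs_mult, Rabs_right; nra. Qed.

Lemma Cmod_expi t : Cmod (Cexpi t) = 1.
Proof. apply Cmod_eq; cunf; simpl. lra. pose proof (sin2_cos2 t); unfold Rsqr in *; lra. Qed.

Lemma Cmod_tri_sub z w : Cmod z - Cmod w <= Cmod (Csub z w).
Proof.
  assert (z = Cadd (Csub z w) w) by (ceq; ring). rewrite H at 1. pose proof (Cmod_tri (Csub z w) w). lra.
Qed.

Definition ccont (f : Cplx -> Cplx) z := forall e, 0 < e -> exists d, 0 < d /\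
  forall w, Cmod (Csub w z) < d -> Cmod (Csub (f w) (f z)) < e.

Lemma Ceq_dec (z w : Cplx) : {z = w} + {z <> w}.
Proof.
  destruct z as [a b], w as [c d].
  destruct (Req_EM_T a c); [destruct (Req_EM_T b d)|].
  - left; subst; reflexivity.
  - right; intros H; inversion H; contradiction.
  - right; intros H; inversion H; contradiction.
Qed.

Lemma Csub_add z w : Csub (Cadd z w) z = w.
Proof. ceq; ring. Qed.
Lemma Cadd_sub z w : Cadd z (Csub w z) = w.
Proof. ceq; ring. Qed.
Lemma Csub_self z : Csub z z = Czero.
Proof. ceq; ring. Qed.
Lemma Csub_eq0 z w : Csub w z = Czero -> w = z.
Proof. intros H. destruct w, z; cunf; simpl in *; injection H; intros; apply cext; simpl; lra. Qed.

Lemma ccont_const c z : ccont (fun _ => c) z.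
Proof. intros e he; exists 1; split; [lra|]; intros; rewrite Csub_self, Cmod_zero; auto. Qed.

Lemma ccont_id z : ccont (fun w => w) z.
Proof. intros e he; exists e; split; auto. Qed.

Lemma Cmod_sub_tri a b c : Cmod (Csub a c) <= Cmod (Csub a b) + Cmod (Csub b c).
Proof. replace (Csub a c) with (Cadd (Csub a b) (Csub b c)) by (ceq; ring). apply Cmod_tri. Qed.

Lemma ccont_add f g z : ccont f z -> ccont g z -> ccont (fun w => Cadd (f w) (g w)) z.
Proof.
  intros Hf Hg e he. destruct (Hf (e/2)) as [d1 [h1 H1]]; [lra|]. destruct (Hg (e/2)) as [d2 [h2 H2]]; [lra|].
  exists (Rmin d1 d2); split; [apply Rmin_pos; auto|]. intros w Hw.
  replace (Csub (Cadd (f w) (g w)) (Cadd (f z) (g z))) with (Cadd (Csub (f w) (f z)) (Csub (g w) (g z))) by (ceq; ring).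
  eapply Rle_lt_trans; [apply Cmod_tri|].
  specialize (H1 w ltac:(eapply Rlt_le_trans; [apply Hw|apply Rmin_l])).
  specialize (H2 w ltac:(eapply Rlt_le_trans; [apply Hw|apply Rmin_r])). lra.
Qed.

Lemma ccont_bound f z : ccont f z -> exists d, 0 < d /\ forall w, Cmod (Csub w z) < d -> Cmod (f w) <= Cmod (f z) + 1.
Proof.
  intros Hf. destruct (Hf 1) as [d [hd H]]; [lra|]. exists d; split; auto. intros w Hw.
  specialize (H w Hw). pose proof (Cmod_tri_sub (f w) (f z)). lra.
Qed.

Lemma ccont_mul f g z : ccont f z -> ccont g z -> ccont (fun w => Cmul (f w) (g w)) z.
Proof.
  intros Hf Hg e he. destruct (ccont_bound f z Hf) as [d0 [h0 H0]].
  set (M := Cmod (f z) + 1 + Cmod (g z)).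
  assert (hM : 0 < M) by (unfold M; pose proof (Cmod_ge0 (f z)); pose proof (Cmod_ge0 (g z)); lra).
  destruct (Hf (e/(3*M))) as [d1 [h1 H1]]. apply Rdiv_lt_0_compat; lra.
  destruct (Hg (e/(3*M))) as [d2 [h2 H2]]. apply Rdiv_lt_0_compat; lra.
  exists (Rmin d0 (Rmin d1 d2)); split. apply Rmin_pos; auto; apply Rmin_pos; auto.
  intros w Hw.
  assert (w0 : Cmod (Csub w z) < d0) by (eapply Rlt_le_trans; [apply Hw|apply Rmin_l]).
  assert (w1 : Cmod (Csub w z) < d1) by (eapply Rlt_le_trans; [apply Hw|]; eapply Rle_trans; [apply Rmin_r|apply Rmin_l]).
  assert (w2 : Cmod (Csub w z) < d2) by (eapply Rlt_le_trans; [apply Hw|]; eapply Rle_trans; [apply Rmin_r|apply Rmin_r]).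
  specialize (H0 w w0); specialize (H1 w w1); specialize (H2 w w2).
  replace (Csub (Cmul (f w) (g w)) (Cmul (f z) (g z))) with
    (Cadd (Cmul (f w) (Csub (g w) (g z))) (Cmul (Csub (f w) (f z)) (g z))) by (ceq; ring).
  eapply Rle_lt_trans; [apply Cmod_tri|]. rewrite !Cmod_mul.
  pose proof (Cmod_ge0 (f w)); pose proof (Cmod_ge0 (g z)); pose proof (Cmod_ge0 (Csub (g w) (g z))); pose proof (Cmod_ge0 (Csub (f w) (f z))).
  assert (Cmod (f w) * Cmod (Csub (g w) (g z)) <= M * (e/(3*M))).
  { apply Rmult_le_compat; try lra. unfold M; lra. }
  assert (Cmod (Csub (f w) (f z)) * Cmod (g z) <= (e/(3*M)) * M).
  { apply Rmult_le_compat; try lra. unfold M; lra. }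
  assert (M * (e / (3*M)) = e/3) by (field; lra). assert ((e / (3*M)) * M = e/3) by (field; lra). lra.
Qed.

Lemma ccont_comp f g z : ccont g z -> ccont f (g z) -> ccont (fun w => f (g w)) z.
Proof.
  intros Hg Hf e he. destruct (Hf e he) as [d1 [h1 H1]]. destruct (Hg d1 h1) as [d2 [h2 H2]].
  exists d2; split; auto.
Qed.

Lemma ccont_inv f z : ccont f z -> f z <> Czero -> ccont (fun w => Cinv (f w)) z.
Proof.
  intros Hf Hnz e he. set (m := Cmod (f z)). assert (hm : 0 < m) by (apply Cmod_pos; auto).
  destruct (Hf (Rmin (m/2) (e * m * m / 2))) as [d [hd H]].
  { apply Rmin_pos; [lra|]. apply Rdiv_lt_0_compat; [|lra]. apply Rmult_lt_0_compat; [apply Rmult_lt_0_compat|]; auto. }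
  exists d; split; auto. intros w Hw. specialize (H w Hw).
  assert (H1 : Cmod (Csub (f w) (f z)) < m/2) by (eapply Rlt_le_trans; [apply H|apply Rmin_l]).
  assert (H2 : Cmod (Csub (f w) (f z)) < e*m*m/2) by (eapply Rlt_le_trans; [apply H|apply Rmin_r]).
  assert (hw : m/2 < Cmod (f w)) by (pose proof (Cmod_tri_sub (f z) (f w)); rewrite Cmod_sub_sym in H1; unfold m in *; lra).
  assert (nw : f w <> Czero) by (intros h; rewrite h, Cmod_zero in hw; lra).
  replace (Csub (Cinv (f w)) (Cinv (f z))) with (Cmul (Csub (f z) (f w)) (Cmul (Cinv (f w)) (Cinv (f z)))).
  2: { pose proof (Cnz_sq _ nw); pose proof (Cnz_sq _ Hnz). destruct (f w), (f z); cunf; simpl in *; apply cext; simpl; field; auto. }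
  rewrite !Cmod_mul, !Cmod_inv by auto. fold m. rewrite Cmod_sub_sym.
  assert (hi : / Cmod (f w) <= 2/m) by (replace (2/m) with (/(m/2)) by (field; lra); apply Rinv_le_contravar; lra).
  assert (0 < /m) by (apply Rinv_0_lt_compat; lra).
  assert (0 <= / Cmod (f w)) by (left; apply Rinv_0_lt_compat; lra).
  apply Rle_lt_trans with (Cmod (Csub (f w) (f z)) * (2/m * /m)).
  { apply Rmult_le_compat_l. apply Cmod_ge0. apply Rmult_le_compat_r; lra. }
  apply Rlt_le_trans with (e*m*m/2 * (2/m * /m)).
  { apply Rmult_lt_compat_r; auto. apply Rmult_lt_0_compat; auto. apply Rdiv_lt_0_compat; lra. }
  right; field; lra.
Qed.

Definition cara f z l := exists phi r, 0 < r /\ (forall w, Cmod (Csub w z) < r -> f w = Cadd (f z) (Cmul (phi w) (Csub w z))) /\ phi z = l /\ ccont phi z.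

Lemma cara_deriv f z l : cara f z l -> has_cderiv f z l.
Proof.
  intros [phi [r [hr [Hf [Hl Hc]]]]] e he. destruct (Hc e he) as [d [hd H]]. exists (Rmin d r); split; [apply Rmin_pos; auto|].
  intros w [hw1 hw2]. assert (nw : w <> Czero) by (intros h; rewrite h, Cmod_zero in hw1; lra).
  assert (hwr : Cmod (Csub (Cadd z w) z) < r) by (rewrite Csub_add; eapply Rlt_le_trans; [apply hw2|apply Rmin_r]).
  rewrite (Hf (Cadd z w) hwr). rewrite !Csub_add.
  replace (Cdiv (Cmul (phi (Cadd z w)) w) w) with (phi (Cadd z w)).
  2: { pose proof (Cnz_sq _ nw). destruct w, (phi (Cadd z (r0, r1))); cunf; simpl in *; apply cext; simpl; field; auto. }
  rewrite <- Hl. apply H. rewrite Csub_add; eapply Rlt_le_trans; [apply hw2|apply Rmin_l].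
Qed.

Lemma deriv_cara f z l : has_cderiv f z l -> cara f z l.
Proof.
  intros Hd.
  exists (fun w => if Ceq_dec w z then l else Cdiv (Csub (f w) (f z)) (Csub w z)), 1.
  split; [lra|split; [|split]].
  - intros w _. destruct (Ceq_dec w z) as [->|n].
    + rewrite Csub_self. ceq; ring.
    + assert (nz : Csub w z <> Czero) by (intros h; apply n, Csub_eq0; auto).
      pose proof (Cnz_sq _ nz). destruct w, z; cunf; simpl in *; apply cext; simpl; field; auto.
  - destruct (Ceq_dec z z); [auto|contradiction].
  - intros e he. destruct (Hd e he) as [d [hd H]]. exists d; split; auto. intros w Hw.
    destruct (Ceq_dec z z) as [_|c]; [|contradiction].
    destruct (Ceq_dec w z) as [->|n].
    + rewrite Csub_self, Cmod_zero; auto.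
    + assert (nz : Csub w z <> Czero) by (intros h; apply n, Csub_eq0; auto).
      specialize (H (Csub w z) (conj (Cmod_pos _ nz) Hw)). rewrite Cadd_sub in H. auto.
Qed.

Lemma cara_cont f z l : cara f z l -> ccont f z.
Proof.
  intros [phi [r [hr [Hf [Hl Hc]]]]].
  assert (ccont (fun w => Cadd (f z) (Cmul (phi w) (Csub w z))) z).
  { apply ccont_add. apply ccont_const. apply ccont_mul; auto.
    intros e he; exists e; split; auto; intros w Hw. rewrite Csub_self. replace (Csub (Csub w z) Czero) with (Csub w z) by (ceq; ring). auto. }
  intros e he. destruct (H e he) as [d [hd H']]. exists (Rmin d r); split; [apply Rmin_pos; auto|]. intros w Hw.
  specialize (H' w ltac:(eapply Rlt_le_trans; [apply Hw|apply Rmin_l])).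
  assert (z0 : Cmod (Csub z z) < r) by (rewrite Csub_self, Cmod_zero; auto).
  rewrite <- (Hf w ltac:(eapply Rlt_le_trans; [apply Hw|apply Rmin_r])), <- (Hf z z0) in H'. auto.
Qed.

Lemma deriv_cont f z l : has_cderiv f z l -> ccont f z.
Proof. intros; eapply cara_cont, deriv_cara; eauto. Qed.

Lemma rmin3 a b c : 0 < a -> 0 < b -> 0 < c -> exists r, 0 < r /\ r <= a /\ r <= b /\ r <= c.
Proof. intros; exists (Rmin a (Rmin b c)); repeat split.
  repeat apply Rmin_pos; auto. apply Rmin_l. eapply Rle_trans; [apply Rmin_r|apply Rmin_l].
  eapply Rle_trans; [apply Rmin_r|apply Rmin_r]. Qed.

Lemma deriv_const c z : has_cderiv (fun _ => c) z Czero.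
Proof. apply cara_deriv. exists (fun _ => Czero), 1. split; [lra|split; [|split]]; auto. intros; ceq; ring. apply ccont_const. Qed.

Lemma deriv_id z : has_cderiv (fun w => w) z Cone.
Proof. apply cara_deriv. exists (fun _ => Cone), 1. split; [lra|split; [|split]]; auto. intros; ceq; ring. apply ccont_const. Qed.

Lemma deriv_add f g z lf lg : has_cderiv f z lf -> has_cderiv g z lg -> has_cderiv (fun w => Cadd (f w) (g w)) z (Cadd lf lg).
Proof.
  intros Hf Hg. apply deriv_cara in Hf as [pf [rf [hrf [Ef [Lf Cf]]]]]. apply deriv_cara in Hg as [pg [rg [hrg [Eg [Lg Cg]]]]].
  apply cara_deriv. exists (fun w => Cadd (pf w) (pg w)), (Rmin rf rg). split; [apply Rmin_pos; auto|split; [|split]].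
  - intros w Hw. rewrite (Ef w), (Eg w). ceq; ring.
    eapply Rlt_le_trans; [apply Hw|apply Rmin_r]. eapply Rlt_le_trans; [apply Hw|apply Rmin_l].
  - rewrite Lf, Lg; auto.
  - apply ccont_add; auto.
Qed.

Lemma deriv_mul f g z lf lg : has_cderiv f z lf -> has_cderiv g z lg ->
  has_cderiv (fun w => Cmul (f w) (g w)) z (Cadd (Cmul lf (g z)) (Cmul (f z) lg)).
Proof.
  intros Hf Hg. pose proof (deriv_cont _ _ _ Hg) as Cgg.
  apply deriv_cara in Hf as [pf [rf [hrf [Ef [Lf Cf]]]]]. apply deriv_cara in Hg as [pg [rg [hrg [Eg [Lg Cg]]]]].
  apply cara_deriv. exists (fun w => Cadd (Cmul (pf w) (g w)) (Cmul (f z) (pg w))), (Rmin rf rg).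
  split; [apply Rmin_pos; auto|split; [|split]].
  - intros w Hw. assert (h1 : Cmod (Csub w z) < rf) by (eapply Rlt_le_trans; [apply Hw|apply Rmin_l]).
    assert (h2 : Cmod (Csub w z) < rg) by (eapply Rlt_le_trans; [apply Hw|apply Rmin_r]).
    rewrite (Ef w h1). rewrite (Eg w h2) at 1. rewrite (Eg w h2). ceq; ring.
  - rewrite Lf, Lg; auto.
  - apply ccont_add; apply ccont_mul; auto. apply ccont_const.
Qed.

Lemma deriv_comp f g z lf lg : has_cderiv g z lg -> has_cderiv f (g z) lf ->
  has_cderiv (fun w => f (g w)) z (Cmul lf lg).
Proof.
  intros Hg Hf. pose proof (deriv_cont _ _ _ Hg) as Cgg.
  apply deriv_cara in Hf as [pf [rf [hrf [Ef [Lf Cf]]]]]. apply deriv_cara in Hg as [pg [rg [hrg [Eg [Lg Cg]]]]].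
  destruct (Cgg rf hrf) as [d [hd Hd]].
  apply cara_deriv. exists (fun w => Cmul (pf (g w)) (pg w)), (Rmin d rg). split; [apply Rmin_pos; auto|split; [|split]].
  - intros w Hw. assert (h1 : Cmod (Csub w z) < d) by (eapply Rlt_le_trans; [apply Hw|apply Rmin_l]).
    assert (h2 : Cmod (Csub w z) < rg) by (eapply Rlt_le_trans; [apply Hw|apply Rmin_r]).
    rewrite (Ef (g w) (Hd w h1)).
    replace (Csub (g w) (g z)) with (Cmul (pg w) (Csub w z)) by (rewrite (Eg w h2); ceq; ring). ceq; ring.
  - rewrite Lf, Lg; auto.
  - apply ccont_mul; auto. apply ccont_comp; auto.
Qed.

Lemma deriv_inv f z l : has_cderiv f z l -> f z <> Czero ->
  has_cderiv (fun w => Cinv (f w)) z (Copp (Cmul l (Cinv (Cmul (f z) (f z))))).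
Proof.
  intros Hf Hnz. pose proof (deriv_cont _ _ _ Hf) as Cff.
  apply deriv_cara in Hf as [pf [rf [hrf [Ef [Lf Cf]]]]].
  destruct (Cff (Cmod (f z))) as [d [hd Hd]]. apply Cmod_pos; auto.
  apply cara_deriv. exists (fun w => Copp (Cmul (pf w) (Cmul (Cinv (f w)) (Cinv (f z))))), (Rmin d rf).
  split; [apply Rmin_pos; auto|split; [|split]].
  - intros w Hw. assert (h1 : Cmod (Csub w z) < d) by (eapply Rlt_le_trans; [apply Hw|apply Rmin_l]).
    assert (h2 : Cmod (Csub w z) < rf) by (eapply Rlt_le_trans; [apply Hw|apply Rmin_r]).
    assert (n0 : f w <> Czero).
    { intros h. specialize (Hd w h1). rewrite h in Hd. replace (Csub Czero (f z)) with (Copp (f z)) in Hd by (ceq; ring).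
      rewrite Cmod_opp in Hd; lra. }
    pose proof (Ef w h2) as E.
    assert (Cmul (pf w) (Csub w z) = Csub (f w) (f z)) by (rewrite E; ceq; ring).
    replace (Cmul (Copp (Cmul (pf w) (Cmul (Cinv (f w)) (Cinv (f z))))) (Csub w z))
      with (Copp (Cmul (Cmul (pf w) (Csub w z)) (Cmul (Cinv (f w)) (Cinv (f z))))) by (ceq; ring).
    rewrite H. pose proof (Cnz_sq _ n0); pose proof (Cnz_sq _ Hnz).
    destruct (f w), (f z); cunf; simpl in *; apply cext; simpl; field; auto.
  - rewrite Lf. pose proof (Cnz_sq _ Hnz). destruct (f z); cunf; simpl in *; apply cext; simpl; field; split; auto; nra.
  - assert (ccont (fun w => Cmul (pf w) (Cmul (Cinv (f w)) (Cinv (f z)))) z).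
    { apply ccont_mul; auto. apply ccont_mul. apply ccont_inv; auto. apply ccont_const. }
    intros e' he'. destruct (H e' he') as [d' [hd' Hd']]. exists d'; split; auto. intros w Hw.
    replace (Csub (Copp (Cmul (pf w) (Cmul (Cinv (f w)) (Cinv (f z))))) (Copp (Cmul (pf z) (Cmul (Cinv (f z)) (Cinv (f z))))))
      with (Copp (Csub (Cmul (pf w) (Cmul (Cinv (f w)) (Cinv (f z)))) (Cmul (pf z) (Cmul (Cinv (f z)) (Cinv (f z)))))) by (ceq; ring).
    rewrite Cmod_opp; auto.
Qed.

Definition P (r t : R) : Cplx := (r * cos t, r * sin t).
Definition iec (r t : R) : Cplx := (- (r * sin t), r * cos t).
Definition radF (F : Cplx -> Cplx) (c t : R) : Cplx := Cmul (F (P t c)) (Cexpi c).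
Definition arcF (F : Cplx -> Cplx) (r t : R) : Cplx := Cmul (F (P r t)) (iec r t).

Definition lc (phi : R -> Cplx) : Cplx -> Cplx := fun w => phi (fst w).
Definition pcont (phi : R -> Cplx) (t0 : R) := ccont (lc phi) (t0, 0).

Lemma cos_lip a b : Rabs (cos a - cos b) <= Rabs (a - b).
Proof.
  destruct (MVT_abs cos (fun x => - sin x) b a) as [c [H _]].
  { intros; apply derivable_pt_lim_cos. }
  rewrite H. rewrite Rabs_Ropp. pose proof (SIN_bound c). pose proof (Rabs_pos (a - b)).
  rewrite <- (Rmult_1_l (Rabs (a-b))) at 2. apply Rmult_le_compat_r; auto. apply Rabs_le; lra.
Qed.

Lemma sin_lip a b : Rabs (sin a - sin b) <= Rabs (a - b).
Proof.
  destruct (MVT_abs sin cos b a) as [c [H _]].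
  { intros; apply derivable_pt_lim_sin. }
  rewrite H. pose proof (COS_bound c). pose proof (Rabs_pos (a - b)).
  rewrite <- (Rmult_1_l (Rabs (a-b))) at 2. apply Rmult_le_compat_r; auto. apply Rabs_le; lra.
Qed.

Lemma P_lip r t r' t' : Cmod (Csub (P r t) (P r' t')) <= 2 * Rabs (r - r') + 2 * Rabs r' * Rabs (t - t').
Proof.
  eapply Rle_trans; [apply Cmod_le_sum|]. unfold P; cunf; simpl.
  replace (r * cos t + - (r' * cos t')) with ((r - r') * cos t + r' * (cos t - cos t')) by ring.
  replace (r * sin t + - (r' * sin t')) with ((r - r') * sin t + r' * (sin t - sin t')) by ring.
  pose proof (COS_bound t); pose proof (SIN_bound t). pose proof (cos_lip t t'); pose proof (sin_lip t t').
  pose proof (Rabs_pos (r - r')); pose proof (Rabs_pos r').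
  assert (Rabs ((r - r') * cos t) <= Rabs (r - r')) by (rewrite Rabs_mult; rewrite <- (Rmult_1_r (Rabs (r-r'))) at 2; apply Rmult_le_compat_l; auto; apply Rabs_le; lra).
  assert (Rabs ((r - r') * sin t) <= Rabs (r - r')) by (rewrite Rabs_mult; rewrite <- (Rmult_1_r (Rabs (r-r'))) at 2; apply Rmult_le_compat_l; auto; apply Rabs_le; lra).
  assert (Rabs (r' * (cos t - cos t')) <= Rabs r' * Rabs (t - t')) by (rewrite Rabs_mult; apply Rmult_le_compat_l; auto).
  assert (Rabs (r' * (sin t - sin t')) <= Rabs r' * Rabs (t - t')) by (rewrite Rabs_mult; apply Rmult_le_compat_l; auto).
  pose proof (Rabs_triang ((r - r') * cos t) (r' * (cos t - cos t'))).
  pose proof (Rabs_triang ((r - r') * sin t) (r' * (sin t - sin t'))). lra.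
Qed.

Lemma Rabs_fst_sub_le (w z : Cplx) : Rabs (fst w - fst z) <= Cmod (Csub w z).
Proof. pose proof (Rabs_Re_le (Csub w z)). cunf; simpl in *. replace (fst w - fst z) with (fst w + - fst z) by ring. auto. Qed.

Lemma pcont_of (phi : R -> Cplx) t0 :
  (forall e, 0 < e -> exists d, 0 < d /\ forall t, Rabs (t - t0) < d -> Cmod (Csub (phi t) (phi t0)) < e) -> pcont phi t0.
Proof.
  intros H e he. destruct (H e he) as [d [hd Hd]]. exists d; split; auto. intros w Hw. unfold lc; simpl.
  apply Hd. eapply Rle_lt_trans; [|apply Hw]. apply (Rabs_fst_sub_le w (t0, 0)).
Qed.

Lemma pcont_rad c t0 : pcont (fun t => P t c) t0.
Proof.
  apply pcont_of. intros e he. exists (e/3); split; [lra|]. intros t Ht.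
  eapply Rle_lt_trans; [apply P_lip|]. replace (c - c) with 0 by ring. rewrite Rabs_R0. lra.
Qed.

Lemma pcont_arc r t0 : pcont (fun t => P r t) t0.
Proof.
  apply pcont_of. intros e he. exists (e/(3 * (Rabs r + 1))); split.
  { apply Rdiv_lt_0_compat; [lra|]. pose proof (Rabs_pos r); lra. }
  intros t Ht. eapply Rle_lt_trans; [apply P_lip|]. replace (r - r) with 0 by ring. rewrite Rabs_R0.
  pose proof (Rabs_pos r). pose proof (Rabs_pos (t - t0)).
  assert (Rabs r * Rabs (t - t0) <= (Rabs r + 1) * (e / (3 * (Rabs r + 1)))).
  { apply Rmult_le_compat; lra. }
  assert ((Rabs r + 1) * (e / (3 * (Rabs r + 1))) = e/3) by (field; lra). lra.
Qed.

Lemma pcont_const (v : Cplx) t0 : pcont (fun _ => v) t0.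
Proof. apply ccont_const. Qed.

Lemma pcont_iec r t0 : pcont (fun t => iec r t) t0.
Proof.
  assert (E: forall t, iec r t = Cmul (P r t) (0,1)) by (intros; unfold iec, P; ceq; ring).
  intros e he. destruct (pcont_arc r t0 e he) as [d [hd H]]. exists d; split; auto.
  intros w Hw; specialize (H w Hw). unfold lc in *. rewrite !E.
  replace (Csub (Cmul (P r (fst w)) (0, 1)) (Cmul (P r (fst (t0, 0))) (0, 1))) with (Cmul (Csub (P r (fst w)) (P r (fst (t0, 0)))) (0,1)) by (ceq; ring).
  rewrite Cmod_mul. replace (Cmod (0,1)) with 1. lra. symmetry; apply Cmod_eq; simpl; lra.
Qed.

Lemma pcont_comp (F : Cplx -> Cplx) gam t0 : pcont gam t0 -> ccont F (gam t0) -> pcont (fun t => F (gam t)) t0.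
Proof. intros H1 H2. unfold pcont, lc in *. apply (ccont_comp F (fun w => gam (fst w))); auto. Qed.

Lemma pcont_mul f g t0 : pcont f t0 -> pcont g t0 -> pcont (fun t => Cmul (f t) (g t)) t0.
Proof. intros; unfold pcont, lc in *. apply (ccont_mul (fun w => f (fst w)) (fun w => g (fst w))); auto. Qed.

Lemma pcont_fst phi t0 : pcont phi t0 -> continuous (fun t => fst (phi t)) t0.
Proof.
  intros H. apply continuity_pt_filterlim. intros e he. destruct (H e he) as [d [hd Hd]].
  exists d; split; auto. intros t [_ Ht]. unfold R_dist in *; simpl in *. unfold R_dist in *.
  specialize (Hd (t, 0)). unfold lc in Hd; simpl in Hd.
  eapply Rle_lt_trans; [apply (Rabs_fst_sub_le (phi t) (phi t0))|]. apply Hd.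
  replace (Csub (t, 0) (t0, 0)) with (RtoC (t - t0)) by (ceq; ring). rewrite Cmod_RtoC. auto.
Qed.

Lemma Rabs_snd_sub_le (w z : Cplx) : Rabs (snd w - snd z) <= Cmod (Csub w z).
Proof. pose proof (Rabs_Im_le (Csub w z)). cunf; simpl in *. replace (snd w - snd z) with (snd w + - snd z) by ring. auto. Qed.

Lemma pcont_snd phi t0 : pcont phi t0 -> continuous (fun t => snd (phi t)) t0.
Proof.
  intros H. apply continuity_pt_filterlim. intros e he. destruct (H e he) as [d [hd Hd]].
  exists d; split; auto. intros t [_ Ht]. unfold R_dist in *; simpl in *. unfold R_dist in *.
  specialize (Hd (t, 0)). unfold lc in Hd; simpl in Hd.
  eapply Rle_lt_trans; [apply (Rabs_snd_sub_le (phi t) (phi t0))|]. apply Hd.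
  replace (Csub (t, 0) (t0, 0)) with (RtoC (t - t0)) by (ceq; ring). rewrite Cmod_RtoC. auto.
Qed.

Definition RI1 (f : R -> Cplx) a b := RInt (fun t => fst (f t)) a b.
Definition RI2 (f : R -> Cplx) a b := RInt (fun t => snd (f t)) a b.

Definition B1 F a b c d := RI1 (radF F c) a b + RI1 (arcF F b) c d - RI1 (radF F d) a b - RI1 (arcF F a) c d.
Definition B2 F a b c d := RI2 (radF F c) a b + RI2 (arcF F b) c d - RI2 (radF F d) a b - RI2 (arcF F a) c d.

Definition Hc F a b c d := forall r t, a <= r <= b -> c <= t <= d -> ccont F (P r t).

Lemma pcont_radF F c t : ccont F (P t c) -> pcont (radF F c) t.
Proof. intros; apply pcont_mul. apply (pcont_comp F (fun t => P t c)); auto. apply pcont_rad. apply pcont_const. Qed.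

Lemma pcont_arcF F r t : ccont F (P r t) -> pcont (arcF F r) t.
Proof. intros; apply pcont_mul. apply (pcont_comp F (fun t => P r t)); auto. apply pcont_arc. apply pcont_iec. Qed.

Lemma ex_fst (phi : R -> Cplx) a b : a <= b -> (forall t, a <= t <= b -> pcont phi t) -> ex_RInt (fun t => fst (phi t)) a b.
Proof. intros hab H. apply (@ex_RInt_continuous R_CompleteNormedModule). intros z Hz. rewrite Rmin_left, Rmax_right in Hz by lra. apply pcont_fst; auto. Qed.
Lemma ex_snd (phi : R -> Cplx) a b : a <= b -> (forall t, a <= t <= b -> pcont phi t) -> ex_RInt (fun t => snd (phi t)) a b.
Proof. intros hab H. apply (@ex_RInt_continuous R_CompleteNormedModule). intros z Hz. rewrite Rmin_left, Rmax_right in Hz by lra. apply pcont_snd; auto. Qed.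

Lemma RInt_split (f : R -> R) a m b : ex_RInt f a m -> ex_RInt f m b -> RInt f a b = RInt f a m + RInt f m b.
Proof. intros H1 H2. rewrite <- (RInt_Chasles f a m b H1 H2). reflexivity. Qed.

Lemma B1_split_r F a m b c d : a <= m <= b -> c <= d -> Hc F a b c d -> B1 F a b c d = B1 F a m c d + B1 F m b c d.
Proof.
  intros [h1 h2] hcd H. unfold B1, RI1.
  rewrite (RInt_split (fun t => fst (radF F c t)) a m b), (RInt_split (fun t => fst (radF F d t)) a m b).
  ring.
  all: apply ex_fst; try lra; intros t Ht; apply pcont_radF; apply H; lra.
Qed.

Lemma B2_split_r F a m b c d : a <= m <= b -> c <= d -> Hc F a b c d -> B2 F a b c d = B2 F a m c d + B2 F m b c d.
Proof.
  intros [h1 h2] hcd H. unfold B2, RI2.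
  rewrite (RInt_split (fun t => snd (radF F c t)) a m b), (RInt_split (fun t => snd (radF F d t)) a m b).
  ring.
  all: apply ex_snd; try lra; intros t Ht; apply pcont_radF; apply H; lra.
Qed.

Lemma B1_split_t F a b c m d : a <= b -> c <= m <= d -> Hc F a b c d -> B1 F a b c d = B1 F a b c m + B1 F a b m d.
Proof.
  intros hab [h1 h2] H. unfold B1, RI1.
  rewrite (RInt_split (fun t => fst (arcF F b t)) c m d), (RInt_split (fun t => fst (arcF F a t)) c m d).
  ring.
  all: apply ex_fst; try lra; intros t Ht; apply pcont_arcF; apply H; lra.
Qed.

Lemma B2_split_t F a b c m d : a <= b -> c <= m <= d -> Hc F a b c d -> B2 F a b c d = B2 F a b c m + B2 F a b m d.
Proof.
  intros hab [h1 h2] H. unfold B2, RI2.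
  rewrite (RInt_split (fun t => snd (arcF F b t)) c m d), (RInt_split (fun t => snd (arcF F a t)) c m d).
  ring.
  all: apply ex_snd; try lra; intros t Ht; apply pcont_arcF; apply H; lra.
Qed.

Lemma Hc_sub F a b c d a' b' c' d' : Hc F a b c d -> a <= a' -> b' <= b -> c <= c' -> d' <= d -> Hc F a' b' c' d'.
Proof. intros H h1 h2 h3 h4 r t Hr Ht. apply H; lra. Qed.

Definition Lam (A B z : Cplx) : Cplx := Cadd (Cmul A z) (Cmul (RtoC (1/2)) (Cmul B (Cmul z z))).
Definition Lin (A B : Cplx) : Cplx -> Cplx := fun z => Cadd A (Cmul B z).

Lemma RInt_deriv (f df : R -> R) a b :
  (forall t, is_derive f t (df t)) -> (forall t, ex_derive df t) -> RInt df a b = f b - f a.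
Proof.
  intros H1 H2. apply is_RInt_unique.
  assert (E: f b - f a = minus (f b) (f a)) by reflexivity. rewrite E.
  apply (@is_RInt_derive R_CompleteNormedModule); intros; auto. exact (ex_derive_continuous df x (H2 x)).
Qed.


Ltac lintac := intros t; unfold radF, arcF, Lin, Lam, P, iec; cunf; simpl; auto_derive; try easy; try field.


Lemma rad_lin1 A B c a b : RI1 (radF (Lin A B) c) a b = fst (Lam A B (P b c)) - fst (Lam A B (P a c)).
Proof. destruct A as [a1 a2], B as [b1 b2]. unfold RI1. apply (RInt_deriv (fun t => fst (Lam (a1,a2) (b1,b2) (P t c)))); lintac. Qed.
Lemma rad_lin2 A B c a b : RI2 (radF (Lin A B) c) a b = snd (Lam A B (P b c)) - snd (Lam A B (P a c)).
Proof. destruct A as [a1 a2], B as [b1 b2]. unfold RI2. apply (RInt_deriv (fun t => snd (Lam (a1,a2) (b1,b2) (P t c)))); lintac. Qed.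
Lemma arc_lin1 A B r a b : RI1 (arcF (Lin A B) r) a b = fst (Lam A B (P r b)) - fst (Lam A B (P r a)).
Proof. destruct A as [a1 a2], B as [b1 b2]. unfold RI1. apply (RInt_deriv (fun t => fst (Lam (a1,a2) (b1,b2) (P r t)))); lintac. Qed.
Lemma arc_lin2 A B r a b : RI2 (arcF (Lin A B) r) a b = snd (Lam A B (P r b)) - snd (Lam A B (P r a)).
Proof. destruct A as [a1 a2], B as [b1 b2]. unfold RI2. apply (RInt_deriv (fun t => snd (Lam (a1,a2) (b1,b2) (P r t)))); lintac. Qed.

Lemma B1_lin A B a b c d : B1 (Lin A B) a b c d = 0.
Proof. unfold B1. rewrite rad_lin1, rad_lin1, arc_lin1, arc_lin1. ring. Qed.
Lemma B2_lin A B a b c d : B2 (Lin A B) a b c d = 0.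
Proof. unfold B2. rewrite rad_lin2, rad_lin2, arc_lin2, arc_lin2. ring. Qed.

Lemma RInt_add (f g : R -> R) a b : ex_RInt f a b -> ex_RInt g a b -> RInt (fun x => f x + g x) a b = RInt f a b + RInt g a b.
Proof. intros H1 H2. exact (@RInt_plus R_CompleteNormedModule f g a b H1 H2). Qed.

Lemma ccont_Lin A B z : ccont (Lin A B) z.
Proof. unfold Lin. apply ccont_add. apply ccont_const. apply ccont_mul. apply ccont_const. apply ccont_id. Qed.

Definition Gm F A B := fun z => Csub (F z) (Lin A B z).

Lemma ccont_Gm F A B z : ccont F z -> ccont (Gm F A B) z.
Proof.
  intros H. unfold Gm. assert (E: forall z, Csub (F z) (Lin A B z) = Cadd (F z) (Cmul (RtoC (-1)) (Lin A B z))) by (intros; ceq; ring).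
  intros e he. destruct (ccont_add F (fun z => Cmul (RtoC (-1)) (Lin A B z)) z H) with (e:=e) as [d [hd Hd]]; auto.
  apply ccont_mul. apply ccont_const. apply ccont_Lin.
  exists d; split; auto. intros w Hw. rewrite !E. apply Hd; auto.
Qed.

Lemma Hc_Gm F A B a b c d : Hc F a b c d -> Hc (Gm F A B) a b c d.
Proof. intros H r t h1 h2. apply ccont_Gm; auto. Qed.

Lemma Hc_Lin A B a b c d : Hc (Lin A B) a b c d.
Proof. intros r t _ _; apply ccont_Lin. Qed.

Lemma radF_decomp F A B c t : fst (radF F c t) = fst (radF (Gm F A B) c t) + fst (radF (Lin A B) c t).
Proof. unfold radF, Gm; cunf; simpl; ring. Qed.
Lemma radF_decomp2 F A B c t : snd (radF F c t) = snd (radF (Gm F A B) c t) + snd (radF (Lin A B) c t).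
Proof. unfold radF, Gm; cunf; simpl; ring. Qed.
Lemma arcF_decomp F A B c t : fst (arcF F c t) = fst (arcF (Gm F A B) c t) + fst (arcF (Lin A B) c t).
Proof. unfold arcF, Gm; cunf; simpl; ring. Qed.
Lemma arcF_decomp2 F A B c t : snd (arcF F c t) = snd (arcF (Gm F A B) c t) + snd (arcF (Lin A B) c t).
Proof. unfold arcF, Gm; cunf; simpl; ring. Qed.

Lemma B1_decomp F A B a b c d : a <= b -> c <= d -> Hc F a b c d -> B1 F a b c d = B1 (Gm F A B) a b c d.
Proof.
  intros hab hcd H. pose proof (Hc_Gm F A B a b c d H) as HG. pose proof (Hc_Lin A B a b c d) as HL.
  rewrite <- (Rplus_0_r (B1 (Gm F A B) a b c d)). rewrite <- (B1_lin A B a b c d).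
  unfold B1, RI1.
  rewrite (RInt_ext _ _ _ _ (fun t _ => radF_decomp F A B c t)).
  rewrite (RInt_ext _ _ _ _ (fun t _ => radF_decomp F A B d t)).
  rewrite (RInt_ext _ _ _ _ (fun t _ => arcF_decomp F A B a t)).
  rewrite (RInt_ext _ _ _ _ (fun t _ => arcF_decomp F A B b t)).
  rewrite !RInt_add. ring.
  all: first [apply ex_fst; [lra|intros t Ht; apply pcont_radF; first [apply HG|apply HL]; lra]
             | apply ex_fst; [lra|intros t Ht; apply pcont_arcF; first [apply HG|apply HL]; lra]].
Qed.

Lemma B2_decomp F A B a b c d : a <= b -> c <= d -> Hc F a b c d -> B2 F a b c d = B2 (Gm F A B) a b c d.
Proof.
  intros hab hcd H. pose proof (Hc_Gm F A B a b c d H) as HG. pose proof (Hc_Lin A B a b c d) as HL.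
  rewrite <- (Rplus_0_r (B2 (Gm F A B) a b c d)). rewrite <- (B2_lin A B a b c d).
  unfold B2, RI2.
  rewrite (RInt_ext _ _ _ _ (fun t _ => radF_decomp2 F A B c t)).
  rewrite (RInt_ext _ _ _ _ (fun t _ => radF_decomp2 F A B d t)).
  rewrite (RInt_ext _ _ _ _ (fun t _ => arcF_decomp2 F A B a t)).
  rewrite (RInt_ext _ _ _ _ (fun t _ => arcF_decomp2 F A B b t)).
  rewrite !RInt_add. ring.
  all: first [apply ex_snd; [lra|intros t Ht; apply pcont_radF; first [apply HG|apply HL]; lra]
             | apply ex_snd; [lra|intros t Ht; apply pcont_arcF; first [apply HG|apply HL]; lra]].
Qed.

Lemma Cmod_iec r t : Cmod (iec r t) = Rabs r.
Proof. apply Cmod_eq. apply Rabs_pos. unfold iec; simpl. rewrite <- Rabs_mult, Rabs_right by nra.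
  pose proof (sin2_cos2 t); unfold Rsqr in *. nra. Qed.

Lemma abs4 x y z w : Rabs (x + y - z - w) <= Rabs x + Rabs y + Rabs z + Rabs w.
Proof. unfold Rabs; repeat destruct Rcase_abs; lra. Qed.

Lemma B_bound G a b c d K : 0 <= a <= b -> c <= d -> Hc G a b c d ->
  (forall r t, a <= r <= b -> c <= t <= d -> Cmod (G (P r t)) <= K) ->
  Rabs (B1 G a b c d) <= K * (2 * (b - a) + (a + b) * (d - c)) /\
  Rabs (B2 G a b c d) <= K * (2 * (b - a) + (a + b) * (d - c)).
Proof.
  intros [ha hab] hcd HG HK.
  assert (Hr : forall cc, c <= cc <= d -> forall t, a <= t <= b -> Cmod (radF G cc t) <= K).
  { intros cc hc t ht. unfold radF. rewrite Cmod_mul, Cmod_expi, Rmult_1_r. apply HK; lra. }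
  assert (Ha : forall rr, a <= rr <= b -> forall t, c <= t <= d -> Cmod (arcF G rr t) <= K * rr).
  { intros rr hr t ht. unfold arcF. rewrite Cmod_mul, Cmod_iec, Rabs_right by lra. apply Rmult_le_compat_r. lra. apply HK; lra. }
  assert (K0 : 0 <= K) by (specialize (HK a c ltac:(lra) ltac:(lra)); pose proof (Cmod_ge0 (G (P a c))); lra).
  assert (E1 : forall cc, c <= cc <= d -> Rabs (RI1 (radF G cc) a b) <= (b - a) * K).
  { intros cc hc. apply abs_RInt_le_const; auto. apply ex_fst; auto. intros t ht; apply pcont_radF; apply HG; lra.
    intros t ht. eapply Rle_trans; [apply Rabs_Re_le|]. apply Hr; lra. }
  assert (E2 : forall cc, c <= cc <= d -> Rabs (RI2 (radF G cc) a b) <= (b - a) * K).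
  { intros cc hc. apply abs_RInt_le_const; auto. apply ex_snd; auto. intros t ht; apply pcont_radF; apply HG; lra.
    intros t ht. eapply Rle_trans; [apply Rabs_Im_le|]. apply Hr; lra. }
  assert (E3 : forall rr, a <= rr <= b -> Rabs (RI1 (arcF G rr) c d) <= (d - c) * (K * rr)).
  { intros rr hr. apply abs_RInt_le_const; auto. apply ex_fst; auto. intros t ht; apply pcont_arcF; apply HG; lra.
    intros t ht. eapply Rle_trans; [apply Rabs_Re_le|]. apply Ha; lra. }
  assert (E4 : forall rr, a <= rr <= b -> Rabs (RI2 (arcF G rr) c d) <= (d - c) * (K * rr)).
  { intros rr hr. apply abs_RInt_le_const; auto. apply ex_snd; auto. intros t ht; apply pcont_arcF; apply HG; lra.
    intros t ht. eapply Rle_trans; [apply Rabs_Im_le|]. apply Ha; lra. }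
  unfold B1, B2. split.
  - pose proof (E1 c ltac:(lra)); pose proof (E1 d ltac:(lra)); pose proof (E3 a ltac:(lra)); pose proof (E3 b ltac:(lra)).
    eapply Rle_trans; [apply abs4|]. nra.
  - pose proof (E2 c ltac:(lra)); pose proof (E2 d ltac:(lra)); pose proof (E4 a ltac:(lra)); pose proof (E4 b ltac:(lra)).
    eapply Rle_trans; [apply abs4|]. nra.
Qed.

Record rect := mkR { ra : R; rb : R; rc : R; rd : R }.

Section G.
Variable F : Cplx -> Cplx.

Definition Nm (Q : rect) := Rabs (B1 F (ra Q) (rb Q) (rc Q) (rd Q)) + Rabs (B2 F (ra Q) (rb Q) (rc Q) (rd Q)).

Definition mr Q := (ra Q + rb Q) / 2.
Definition mt Q := (rc Q + rd Q) / 2.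
Definition q1 Q := mkR (ra Q) (mr Q) (rc Q) (mt Q).
Definition q2 Q := mkR (ra Q) (mr Q) (mt Q) (rd Q).
Definition q3 Q := mkR (mr Q) (rb Q) (rc Q) (mt Q).
Definition q4 Q := mkR (mr Q) (rb Q) (mt Q) (rd Q).

Definition step Q :=
  if Rle_dec (Nm Q) (4 * Nm (q1 Q)) then q1 Q else
  if Rle_dec (Nm Q) (4 * Nm (q2 Q)) then q2 Q else
  if Rle_dec (Nm Q) (4 * Nm (q3 Q)) then q3 Q else q4 Q.

Lemma decomp4 Q : ra Q <= rb Q -> rc Q <= rd Q -> Hc F (ra Q) (rb Q) (rc Q) (rd Q) ->
  Nm Q <= Nm (q1 Q) + Nm (q2 Q) + Nm (q3 Q) + Nm (q4 Q).
Proof.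
  destruct Q as [a b c d]; simpl; intros hab hcd H. unfold Nm, q1, q2, q3, q4, mr, mt; simpl.
  set (m := (a+b)/2). set (n := (c+d)/2).
  assert (hm : a <= m <= b) by (unfold m; lra). assert (hn : c <= n <= d) by (unfold n; lra).
  rewrite (B1_split_r F a m b c d), (B2_split_r F a m b c d) by auto.
  rewrite (B1_split_t F a m c n d), (B2_split_t F a m c n d) by (try lra; eapply Hc_sub; eauto; lra).
  rewrite (B1_split_t F m b c n d), (B2_split_t F m b c n d) by (try lra; eapply Hc_sub; eauto; lra).
  set (x1 := B1 F a m c n); set (x2 := B1 F a m n d); set (x3 := B1 F m b c n); set (x4 := B1 F m b n d).
  set (y1 := B2 F a m c n); set (y2 := B2 F a m n d); set (y3 := B2 F m b c n); set (y4 := B2 F m b n d).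
  assert (forall p q r s, Rabs (p + q + (r + s)) <= Rabs p + Rabs q + Rabs r + Rabs s) by (intros; unfold Rabs; repeat destruct Rcase_abs; lra).
  pose proof (H0 x1 x2 x3 x4); pose proof (H0 y1 y2 y3 y4). lra.
Qed.

Lemma step_good Q : ra Q <= rb Q -> rc Q <= rd Q -> Hc F (ra Q) (rb Q) (rc Q) (rd Q) -> Nm Q <= 4 * Nm (step Q).
Proof.
  intros h1 h2 h3. pose proof (decomp4 Q h1 h2 h3). unfold step.
  destruct (Rle_dec (Nm Q) (4 * Nm (q1 Q))); auto.
  destruct (Rle_dec (Nm Q) (4 * Nm (q2 Q))); auto.
  destruct (Rle_dec (Nm Q) (4 * Nm (q3 Q))); auto. lra.
Qed.

Lemma step_geom Q : ra Q <= rb Q -> rc Q <= rd Q ->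
  ra Q <= ra (step Q) /\ rb (step Q) <= rb Q /\ rc Q <= rc (step Q) /\ rd (step Q) <= rd Q /\
  rb (step Q) - ra (step Q) = (rb Q - ra Q) / 2 /\ rd (step Q) - rc (step Q) = (rd Q - rc Q) / 2.
Proof.
  intros h1 h2. unfold step.
  destruct (Rle_dec _ _); [|destruct (Rle_dec _ _); [|destruct (Rle_dec _ _)]];
  unfold q1, q2, q3, q4, mr, mt; simpl; repeat split; lra.
Qed.

End G.

Lemma lin_approx F zs l e : has_cderiv F zs l -> 0 < e -> exists d, 0 < d /\ forall z, Cmod (Csub z zs) < d ->
  Cmod (Gm F (Csub (F zs) (Cmul l zs)) l z) <= e * Cmod (Csub z zs).
Proof.
  intros H he. destruct (H e he) as [d [hd Hd]]. exists d; split; auto. intros z Hz.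
  destruct (Ceq_dec z zs) as [->|n].
  - replace (Gm F (Csub (F zs) (Cmul l zs)) l zs) with Czero by (unfold Gm, Lin; ceq; ring).
    rewrite Cmod_zero, Csub_self, Cmod_zero; lra.
  - assert (nz : Csub z zs <> Czero) by (intros h; apply n, Csub_eq0; auto).
    specialize (Hd (Csub z zs) (conj (Cmod_pos _ nz) Hz)). rewrite Cadd_sub in Hd.
    replace (Gm F (Csub (F zs) (Cmul l zs)) l z) with (Cmul (Csub (Cdiv (Csub (F z) (F zs)) (Csub z zs)) l) (Csub z zs)).
    2: { pose proof (Cnz_sq _ nz). unfold Gm, Lin. destruct z, zs; cunf; simpl in *; apply cext; simpl; field; auto. }
    rewrite Cmod_mul. apply Rmult_le_compat_r. apply Cmod_ge0. lra.
Qed.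

Lemma pow2_big (eta : R) : 0 < eta -> exists k : nat, / 2 ^ k < eta.
Proof.
  intros he. destruct (pow_lt_1_zero (/2) ltac:(rewrite Rabs_right; lra) eta he) as [N HN].
  exists N. specialize (HN N (le_n N)). rewrite <- pow_inv. rewrite Rabs_right in HN; auto.
  apply Rle_ge, pow_le; lra.
Qed.

Section Gour.
Variable F : Cplx -> Cplx.
Variables a0 b0 c0 d0 : R.
Hypothesis ha0 : 0 <= a0.
Hypothesis hab : a0 <= b0.
Hypothesis hcd : c0 <= d0.
Hypothesis HD : forall r t, a0 <= r <= b0 -> c0 <= t <= d0 -> exists l, has_cderiv F (P r t) l.

Lemma HC0 : Hc F a0 b0 c0 d0.
Proof. intros r t h1 h2. destruct (HD r t h1 h2) as [l Hl]. eapply deriv_cont; eauto. Qed.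

Definition Q0 := mkR a0 b0 c0 d0.
Definition Qk (k : nat) := Nat.iter k (step F) Q0.

Lemma inv k : a0 <= ra (Qk k) <= rb (Qk k) /\ rb (Qk k) <= b0 /\ c0 <= rc (Qk k) <= rd (Qk k) /\ rd (Qk k) <= d0 /\
  rb (Qk k) - ra (Qk k) = (b0 - a0) / 2 ^ k /\ rd (Qk k) - rc (Qk k) = (d0 - c0) / 2 ^ k /\
  Nm F Q0 <= 4 ^ k * Nm F (Qk k).
Proof.
  induction k.
  - unfold Qk, Q0; simpl. repeat split; lra.
  - destruct IHk as (h1 & h2 & h3 & h4 & h5 & h6 & h7).
    unfold Qk; simpl Nat.iter. fold (Qk k).
    assert (hk1 : ra (Qk k) <= rb (Qk k)) by lra. assert (hk2 : rc (Qk k) <= rd (Qk k)) by lra.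
    destruct (step_geom F (Qk k) hk1 hk2) as (g1 & g2 & g3 & g4 & g5 & g6).
    pose proof (step_good F (Qk k) hk1 hk2 ltac:(eapply Hc_sub; [apply HC0|..]; lra)).
    assert (0 < 2 ^ k) by (apply pow_lt; lra).
    repeat split; try lra.
    + rewrite g5, h5. simpl. field. lra.
    + rewrite g6, h6. simpl. field. lra.
    + simpl. pose proof (pow_lt 4 k ltac:(lra)). nra.
Qed.

Lemma mono j k : (j <= k)%nat -> ra (Qk j) <= ra (Qk k) /\ rb (Qk k) <= rb (Qk j) /\ rc (Qk j) <= rc (Qk k) /\ rd (Qk k) <= rd (Qk j).
Proof.
  intros H. induction H. lra.
  destruct IHle as (h1 & h2 & h3 & h4). destruct (inv m) as (i1 & i2 & i3 & i4 & _).
  change (Qk (S m)) with (step F (Qk m)).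
  destruct (step_geom F (Qk m) ltac:(lra) ltac:(lra)) as (g1 & g2 & g3 & g4 & _). lra.
Qed.

Lemma lim_pt : exists u v, (forall k, ra (Qk k) <= u <= rb (Qk k)) /\ (forall k, rc (Qk k) <= v <= rd (Qk k)).
Proof.
  destruct (completeness (fun x => exists k, x = ra (Qk k))) as [u [Hu1 Hu2]].
  { exists b0. intros x [k ->]. destruct (inv k); lra. }
  { exists (ra (Qk 0)); exists 0%nat; auto. }
  destruct (completeness (fun x => exists k, x = rc (Qk k))) as [v [Hv1 Hv2]].
  { exists d0. intros x [k ->]. destruct (inv k) as (_ & _ & ? & ? & _); lra. }
  { exists (rc (Qk 0)); exists 0%nat; auto. }
  exists u, v. split; intros k; split.
  - apply Hu1; exists k; auto.
  - apply Hu2. intros x [j ->]. destruct (le_lt_dec j k) as [h|h].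
    + destruct (mono j k h). destruct (inv k); lra.
    + destruct (mono k j ltac:(lia)) as (_ & ? & _). destruct (inv j); lra.
  - apply Hv1; exists k; auto.
  - apply Hv2. intros x [j ->]. destruct (le_lt_dec j k) as [h|h].
    + destruct (mono j k h) as (_ & _ & ? & _). destruct (inv k) as (_ & _ & ? & _); lra.
    + destruct (mono k j ltac:(lia)) as (_ & _ & _ & ?). destruct (inv j) as (_ & _ & ? & _); lra.
Qed.

Theorem goursat : B1 F a0 b0 c0 d0 = 0 /\ B2 F a0 b0 c0 d0 = 0.
Proof.
  destruct lim_pt as [u [v [Hu Hv]]].
  assert (hu : a0 <= u <= b0) by (destruct (inv 0) as (? & ? & _); specialize (Hu 0%nat); unfold Qk in *; simpl in *; lra).
  assert (hv : c0 <= v <= d0) by (destruct (inv 0) as (_ & _ & ? & ? & _); specialize (Hv 0%nat); unfold Qk in *; simpl in *; lra).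
  destruct (HD u v hu hv) as [l Hl].
  set (C := 2 * (b0 - a0) + 2 * b0 * (d0 - c0)).
  assert (hC : 0 <= C) by (unfold C; nra).
  assert (Nm F Q0 = 0).
  { apply Rle_antisym; [|unfold Nm; pose proof (Rabs_pos (B1 F (ra Q0) (rb Q0) (rc Q0) (rd Q0))); pose proof (Rabs_pos (B2 F (ra Q0) (rb Q0) (rc Q0) (rd Q0))); lra].
    apply le_epsilon. intros e he.
    destruct (lin_approx F (P u v) l (e / (2 * (C * C + 1))) Hl) as [d [hd Hd]].
    { apply Rdiv_lt_0_compat; [lra|]. nra. }
    destruct (pow2_big (d / (C + 1))) as [k hk]. apply Rdiv_lt_0_compat; lra.
    destruct (inv k) as (i1 & i2 & i3 & i4 & i5 & i6 & i7).
    set (Q := Qk k) in *. set (rho := C / 2 ^ k).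
    assert (h2k : 0 < 2 ^ k) by (apply pow_lt; lra).
    assert (hrho : rho < d).
    { unfold rho. unfold Rdiv. apply Rle_lt_trans with ((C + 1) * / 2 ^ k).
      apply Rmult_le_compat_r. left; apply Rinv_0_lt_compat; auto. lra.
      apply Rmult_lt_reg_l with (/ (C + 1)). apply Rinv_0_lt_compat; lra.
      rewrite <- Rmult_assoc, Rinv_l, Rmult_1_l by lra. rewrite Rmult_comm. unfold Rdiv in hk. lra. }
    assert (hrho0 : 0 <= rho) by (unfold rho; apply Rmult_le_pos; auto; left; apply Rinv_0_lt_compat; auto).
    assert (Hdist : forall r t, ra Q <= r <= rb Q -> rc Q <= t <= rd Q -> Cmod (Csub (P r t) (P u v)) <= rho).
    { intros r t hr ht. eapply Rle_trans; [apply P_lip|]. specialize (Hu k); specialize (Hv k). fold Q in Hu, Hv.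
      rewrite (Rabs_right u) by lra.
      assert (Rabs (r - u) <= (b0 - a0) / 2 ^ k) by (apply Rabs_le; lra).
      assert (Rabs (t - v) <= (d0 - c0) / 2 ^ k) by (apply Rabs_le; lra).
      assert (u * Rabs (t - v) <= b0 * ((d0 - c0) / 2 ^ k)) by (apply Rmult_le_compat; try lra; apply Rabs_pos).
      unfold rho, C. replace ((2 * (b0 - a0) + 2 * b0 * (d0 - c0)) / 2 ^ k) with (2 * ((b0 - a0) / 2 ^ k) + 2 * (b0 * ((d0 - c0) / 2 ^ k))) by (field; lra).
      lra. }
    set (A := Csub (F (P u v)) (Cmul l (P u v))).
    assert (HcQ : Hc F (ra Q) (rb Q) (rc Q) (rd Q)) by (eapply Hc_sub; [apply HC0|..]; lra).
    set (N0 := Nm F Q0) in *. unfold Nm in i7.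
    rewrite (B1_decomp F A l (ra Q) (rb Q) (rc Q) (rd Q)) in i7 by (auto; lra).
    rewrite (B2_decomp F A l (ra Q) (rb Q) (rc Q) (rd Q)) in i7 by (auto; lra).
    destruct (B_bound (Gm F A l) (ra Q) (rb Q) (rc Q) (rd Q) (e / (2 * (C * C + 1)) * rho)) as [b1 b2]; try lra.
    { apply Hc_Gm; auto. }
    { intros r t hr ht. eapply Rle_trans; [apply Hd|]. eapply Rle_lt_trans; [apply Hdist|]; eauto.
      apply Rmult_le_compat_l. left; apply Rdiv_lt_0_compat; [lra|nra]. apply Hdist; auto. }
    assert (Hw : 2 * (rb Q - ra Q) + (ra Q + rb Q) * (rd Q - rc Q) <= rho).
    { rewrite i5. assert ((ra Q + rb Q) * (rd Q - rc Q) <= (2 * b0) * ((d0 - c0) / 2 ^ k)).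
      { rewrite i6. apply Rmult_le_compat; try lra. all: try (apply Rdiv_le_0_compat; lra). }
      unfold rho, C. replace ((2 * (b0 - a0) + 2 * b0 * (d0 - c0)) / 2 ^ k) with (2 * ((b0 - a0) / 2 ^ k) + 2 * b0 * ((d0 - c0) / 2 ^ k)) by (field; lra). lra. }
    set (E := e / (2 * (C * C + 1))) in *.
    assert (hE : 0 < E) by (unfold E; apply Rdiv_lt_0_compat; [lra|nra]).
    assert (M : E * rho * (2 * (rb Q - ra Q) + (ra Q + rb Q) * (rd Q - rc Q)) <= E * rho * rho).
    { apply Rmult_le_compat_l; [|auto]. apply Rmult_le_pos; lra. }
    assert (N0 <= 4 ^ k * (2 * (E * rho * rho))) by (pose proof (pow_lt 4 k ltac:(lra)); nra).
    assert (4 ^ k * (rho * rho) = C * C).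
    { unfold rho. replace (4 ^ k) with (2 ^ k * 2 ^ k) by (rewrite <- Rpow_mult_distr; f_equal; lra). field. lra. }
    assert (4 ^ k * (2 * (E * rho * rho)) = 2 * E * (C * C)) by nra.
    assert (2 * E * (C * C) <= e) by (unfold E; apply Rmult_le_reg_r with (2 * (C * C + 1)); [nra|]; field_simplify; nra).
    lra. }
  unfold Nm, Q0 in H; simpl in H. pose proof (Rabs_pos (B1 F a0 b0 c0 d0)); pose proof (Rabs_pos (B2 F a0 b0 c0 d0)).
  split; apply Rabs_eq_0; lra.
Qed.

End Gour.

Lemma P_nz r t : 0 < r -> P r t <> Czero.
Proof.
  intros hr H. apply (f_equal Cmod) in H. rewrite Cmod_zero in H.
  assert (Cmod (P r t) = r). { apply Cmod_eq. lra. unfold P; simpl. pose proof (sin2_cos2 t); unfold Rsqr in *. nra. }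
  lra.
Qed.

Lemma Cinv_P r t : 0 < r -> Cinv (P r t) = (cos t / r, - sin t / r).
Proof.
  intros hr. pose proof (sin2_cos2 t); unfold Rsqr in *. unfold Cinv, P; simpl.
  assert (E: r * cos t * (r * cos t) + r * sin t * (r * sin t) = r * r) by nra.
  rewrite E. apply cext; simpl; field; lra.
Qed.

Lemma arcG_eq F r t : 0 < r -> arcF (fun z => Cmul (F z) (Cinv z)) r t = Cmul (F (P r t)) (0, 1).
Proof.
  intros hr. unfold arcF. rewrite Cinv_P by auto. unfold iec. pose proof (sin2_cos2 t); unfold Rsqr in *.
  destruct (F (P r t)) as [x y]. cunf; apply cext; simpl; field_simplify_eq; try lra;
  replace (cos t ^ 2) with (1 - sin t ^ 2) by (simpl; lra); ring.
Qed.

Lemma deriv_G F z l : has_cderiv F z l -> z <> Czero -> exists l', has_cderiv (fun w => Cmul (F w) (Cinv w)) z l'.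
Proof.
  intros H hz. eexists. apply deriv_mul; eauto. apply (deriv_inv (fun w => w)); auto. apply deriv_id.
Qed.

Theorem annulus F r1 r2 : 0 < r1 <= r2 ->
  (forall r t, r1 <= r <= r2 -> 0 <= t <= 2 * PI -> exists l, has_cderiv F (P r t) l) ->
  RInt (fun t => fst (F (P r1 t))) 0 (2 * PI) = RInt (fun t => fst (F (P r2 t))) 0 (2 * PI) /\
  RInt (fun t => snd (F (P r1 t))) 0 (2 * PI) = RInt (fun t => snd (F (P r2 t))) 0 (2 * PI).
Proof.
  intros hr HD. set (G := fun z => Cmul (F z) (Cinv z)).
  destruct (goursat G r1 r2 0 (2 * PI)) as [g1 g2]; try lra.
  { pose proof PI_RGT_0; lra. }
  { intros r t h1 h2. destruct (HD r t h1 h2) as [l Hl]. apply (deriv_G F _ l Hl). apply P_nz; lra. }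
  unfold B1, B2, RI1, RI2 in *.
  assert (ER : forall t, radF G 0 t = radF G (2 * PI) t).
  { intros t. unfold radF, P, Cexpi. rewrite cos_2PI, sin_2PI, cos_0, sin_0. reflexivity. }
  rewrite (RInt_ext (fun t => fst (radF G 0 t)) (fun t => fst (radF G (2*PI) t))) in g1 by (intros; rewrite ER; auto).
  rewrite (RInt_ext (fun t => snd (radF G 0 t)) (fun t => snd (radF G (2*PI) t))) in g2 by (intros; rewrite ER; auto).
  rewrite (RInt_ext (fun t => fst (arcF G r1 t)) (fun t => - snd (F (P r1 t)))) in g1
    by (intros; unfold G; rewrite arcG_eq by lra; destruct (F (P r1 x)); simpl; ring).
  rewrite (RInt_ext (fun t => fst (arcF G r2 t)) (fun t => - snd (F (P r2 t)))) in g1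
    by (intros; unfold G; rewrite arcG_eq by lra; destruct (F (P r2 x)); simpl; ring).
  rewrite (RInt_ext (fun t => snd (arcF G r1 t)) (fun t => fst (F (P r1 t)))) in g2
    by (intros; unfold G; rewrite arcG_eq by lra; destruct (F (P r1 x)); simpl; ring).
  rewrite (RInt_ext (fun t => snd (arcF G r2 t)) (fun t => fst (F (P r2 t)))) in g2
    by (intros; unfold G; rewrite arcG_eq by lra; destruct (F (P r2 x)); simpl; ring).
  assert (EX : forall r, r1 <= r <= r2 -> ex_RInt (fun t => snd (F (P r t))) 0 (2 * PI)).
  { intros r hr'. apply ex_snd. pose proof PI_RGT_0; lra. intros t ht. apply (pcont_comp F (fun t => P r t)). apply pcont_arc.
    destruct (HD r t hr' ht) as [l Hl]; eapply deriv_cont; eauto. }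
  rewrite (RInt_opp (V:=R_CompleteNormedModule) (fun t => snd (F (P r1 t)))) in g1 by (apply EX; lra).
  rewrite (RInt_opp (V:=R_CompleteNormedModule) (fun t => snd (F (P r2 t)))) in g1 by (apply EX; lra).
  unfold opp in g1; simpl in g1.
  split; lra.
Qed.

Lemma Cmod_P r t : 0 <= r -> Cmod (P r t) = r.
Proof. intros hr. apply Cmod_eq; auto. unfold P; simpl. pose proof (sin2_cos2 t); unfold Rsqr in *. nra. Qed.

Section MV.
Variable b : bool.
Definition pr (z : Cplx) : R := if b then fst z else snd z.

Lemma pr_sub z w : pr (Csub z w) = pr z - pr w.
Proof. unfold pr; destruct b; cunf; simpl; ring. Qed.
Lemma pr_le z : Rabs (pr z) <= Cmod z.
Proof. unfold pr; destruct b; [apply Rabs_Re_le|apply Rabs_Im_le]. Qed.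
Lemma pr_cont phi t0 : pcont phi t0 -> continuous (fun t => pr (phi t)) t0.
Proof. unfold pr; destruct b; [apply pcont_fst|apply pcont_snd]. Qed.
Lemma pr_ex phi a c : a <= c -> (forall t, a <= t <= c -> pcont phi t) -> ex_RInt (fun t => pr (phi t)) a c.
Proof. unfold pr; destruct b; [apply ex_fst|apply ex_snd]. Qed.

Variable F : Cplx -> Cplx.
Variable zs : Cplx.
Hypothesis HC : forall z, Cmod z < 1 -> ccont F z.
Hypothesis HD : forall z, Cmod z < 1 -> z <> Czero -> z <> zs -> exists l, has_cderiv F z l.

Definition Phi r := RInt (fun t => pr (F (P r t))) 0 (2 * PI).

Lemma PI2_pos : 0 < 2 * PI.
Proof. pose proof PI_RGT_0; lra. Qed.

Lemma ex_Phi r : 0 <= r < 1 -> ex_RInt (fun t => pr (F (P r t))) 0 (2 * PI).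
Proof.
  intros hr. apply pr_ex. pose proof PI2_pos; lra. intros t ht. apply (pcont_comp F (fun t => P r t)). apply pcont_arc.
  apply HC. rewrite Cmod_P; lra.
Qed.

Lemma RInt_diff_bound (f g : R -> R) a c M : a <= c -> ex_RInt f a c -> ex_RInt g a c ->
  (forall t, a <= t <= c -> Rabs (f t - g t) <= M) -> Rabs (RInt f a c - RInt g a c) <= (c - a) * M.
Proof.
  intros hac H1 H2 H. change (RInt f a c - RInt g a c) with (minus (RInt f a c) (RInt g a c)).
  rewrite <- (RInt_minus (V:=R_CompleteNormedModule) f g a c H1 H2).
  apply abs_RInt_le_const; auto. apply (ex_RInt_minus (V:=R_CompleteNormedModule)); auto.
Qed.

Lemma Phi_cont rho : 0 < rho < 1 -> forall e, 0 < e -> exists d, 0 < d /\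
  forall r, 0 < r < 1 -> Rabs (r - rho) < d -> Rabs (Phi r - Phi rho) <= e.
Proof.
  intros hrho e he. set (f := fun u v => pr (F (P u v))).
  assert (HCf : forall x y, rho/2 <= x <= (1+rho)/2 -> 0 <= y <= 2 * PI -> continuity_2d_pt f x y).
  { intros x y hx hy eps. destruct (HC (P x y)) with (e := pos eps) as [d [hd Hd]].
    rewrite Cmod_P; lra. apply cond_pos.
    assert (hx0 : 0 < 2 + 2 * Rabs x) by (pose proof (Rabs_pos x); lra).
    exists (mkposreal (d / (2 + 2 * Rabs x)) ltac:(apply Rdiv_lt_0_compat; lra)). simpl. intros u v hu hv.
    unfold f. rewrite <- pr_sub. eapply Rle_lt_trans; [apply pr_le|]. apply Hd.
    eapply Rle_lt_trans; [apply P_lip|].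
    pose proof (Rabs_pos x).
    assert (Rabs x * Rabs (v - y) <= Rabs x * (d / (2 + 2 * Rabs x))) by (apply Rmult_le_compat_l; lra).
    assert (d = (2 + 2 * Rabs x) * (d / (2 + 2 * Rabs x))) by (field; lra). nra. }
  set (e' := e / (2 * PI + 1)).
  assert (he' : 0 < e') by (unfold e'; apply Rdiv_lt_0_compat; pose proof PI2_pos; lra).
  destruct (uniform_continuity_2d f (rho/2) ((1+rho)/2) 0 (2*PI) HCf (mkposreal e' he')) as [dl Hdl].
  exists (Rmin dl (Rmin (rho/2) ((1-rho)/2))). split. apply Rmin_pos; [apply cond_pos|apply Rmin_pos; lra].
  intros r hr hrr. unfold Phi.
  eapply Rle_trans. apply RInt_diff_bound. pose proof PI2_pos; lra. apply ex_Phi; lra. apply ex_Phi; lra.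
  intros t ht. left. apply (Hdl rho t r t); try lra.
  - apply Rabs_lt_between' in hrr. pose proof (Rmin_r dl (Rmin (rho/2) ((1-rho)/2))).
    pose proof (Rmin_l (rho/2) ((1-rho)/2)). pose proof (Rmin_r (rho/2) ((1-rho)/2)). lra.
  - eapply Rlt_le_trans; [apply hrr|apply Rmin_l].
  - replace (t - t) with 0 by ring; rewrite Rabs_R0; apply cond_pos.
  - unfold e'. simpl. pose proof PI2_pos.
    replace ((2 * PI - 0) * (e / (2 * PI + 1))) with (e - e / (2 * PI + 1)) by (field; lra).
    assert (0 < e / (2 * PI + 1)) by (apply Rdiv_lt_0_compat; lra). lra.
Qed.

Lemma Phi_lim0 e : 0 < e -> exists d, 0 < d /\ forall r, 0 < r < d -> Rabs (Phi r - 2 * PI * pr (F Czero)) <= e.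
Proof.
  intros he. destruct (HC Czero) with (e := e / (2 * PI)) as [d [hd Hd]].
  rewrite Cmod_zero; lra. apply Rdiv_lt_0_compat; pose proof PI2_pos; lra.
  exists (Rmin d 1); split. apply Rmin_pos; lra. intros r hr.
  assert (hr1 : r < 1) by (pose proof (Rmin_r d 1); lra). assert (hrd : r < d) by (pose proof (Rmin_l d 1); lra).
  unfold Phi. replace (2 * PI * pr (F Czero)) with (RInt (fun _ => pr (F Czero)) 0 (2 * PI)).
  2: { rewrite RInt_const. unfold scal; simpl; unfold mult; simpl. ring. }
  eapply Rle_trans. apply RInt_diff_bound. pose proof PI2_pos; lra. apply ex_Phi; lra.
  apply ex_RInt_const.
  intros t ht. rewrite <- pr_sub. eapply Rle_trans; [apply pr_le|]. left; apply Hd.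
  replace (Csub (P r t) Czero) with (P r t) by (unfold P; ceq; ring). rewrite Cmod_P; lra.
  right; field. pose proof PI2_pos; lra.
Qed.

Lemma Phi_ann r1 r2 : 0 < r1 <= r2 -> r2 < 1 -> ~ (r1 <= Cmod zs <= r2) -> Phi r1 = Phi r2.
Proof.
  intros h1 h2 h3. destruct (annulus F r1 r2 h1) as [A1 A2].
  { intros r t hr ht. apply HD. rewrite Cmod_P; lra. apply P_nz; lra.
    intros E. apply h3. rewrite <- E, Cmod_P; lra. }
  unfold Phi, pr; destruct b; auto.
Qed.

Lemma Phi_to_s r : 0 < r < 1 -> 0 < Cmod zs < 1 -> Phi r = Phi (Cmod zs).
Proof.
  intros hr hs. set (s := Cmod zs) in *.
  destruct (Rtotal_order r s) as [h|[h|h]]; [|subst; auto|].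
  - apply Rminus_diag_uniq. apply Rabs_eq_0. apply Rle_antisym; [|apply Rabs_pos].
    apply le_epsilon; intros e he. rewrite Rplus_0_l.
    destruct (Phi_cont s hs e he) as [d [hd Hd]].
    set (r' := Rmax r (s - d/2)).
    assert (hr' : r <= r' < s) by (unfold r'; split; [apply Rmax_l|apply Rmax_lub_lt; lra]).
    assert (E : Phi r = Phi r') by (apply Phi_ann; try lra; fold s; lra).
    rewrite E. apply Hd. lra. apply Rabs_lt_between'. split; [|lra].
    pose proof (Rmax_r r (s - d/2)). unfold r' in *; lra.
  - apply Rminus_diag_uniq. apply Rabs_eq_0. apply Rle_antisym; [|apply Rabs_pos].
    apply le_epsilon; intros e he. rewrite Rplus_0_l.
    destruct (Phi_cont s hs e he) as [d [hd Hd]].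
    set (r' := Rmin r (s + d/2)).
    assert (hr' : s < r' <= r) by (unfold r'; split; [apply Rmin_glb_lt; lra|apply Rmin_l]).
    assert (E : Phi r' = Phi r) by (apply Phi_ann; try lra; fold s; lra).
    rewrite <- E. apply Hd. lra. apply Rabs_lt_between'. split; [lra|].
    pose proof (Rmin_r r (s + d/2)). unfold r' in *; lra.
Qed.

Lemma Phi_const r r' : 0 < r < 1 -> 0 < r' < 1 -> Phi r = Phi r'.
Proof.
  intros h1 h2. destruct (Rlt_dec 0 (Cmod zs)) as [hs|hs]; [destruct (Rlt_dec (Cmod zs) 1) as [hs'|hs']|].
  - rewrite (Phi_to_s r), (Phi_to_s r'); auto.
  - destruct (Rle_dec r r'). apply Phi_ann; lra. symmetry; apply Phi_ann; lra.
  - destruct (Rle_dec r r'). apply Phi_ann; lra. symmetry; apply Phi_ann; lra.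
Qed.

Theorem mv r : 0 < r < 1 -> Phi r = 2 * PI * pr (F Czero).
Proof.
  intros hr. apply Rminus_diag_uniq. apply Rabs_eq_0. apply Rle_antisym; [|apply Rabs_pos].
  apply le_epsilon; intros e he. rewrite Rplus_0_l.
  destruct (Phi_lim0 e he) as [d [hd Hd]].
  rewrite (Phi_const r (Rmin (d/2) (1/2))); auto.
  apply Hd. split. apply Rmin_pos; lra. pose proof (Rmin_l (d/2) (1/2)); lra.
  split. apply Rmin_pos; lra. pose proof (Rmin_r (d/2) (1/2)); lra.
Qed.

End MV.

Definition n2 (z : Cplx) := Re z * Re z + Im z * Im z.

Lemma n2_Cmod z : n2 z = Cmod z * Cmod z.
Proof. unfold n2; rewrite Cmod_sq; auto. Qed.

Lemma n2_mul z w : n2 (Cmul z w) = n2 z * n2 w.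
Proof. unfold n2; destruct z, w; cunf; simpl; ring. Qed.

Lemma n2_ge0 z : 0 <= n2 z.
Proof. unfold n2; nra. Qed.

Lemma Cmod_lt1_n2 z : Cmod z < 1 -> n2 z < 1.
Proof. intros H. rewrite n2_Cmod. pose proof (Cmod_ge0 z). nra. Qed.

Lemma n2_lt1_Cmod z : n2 z < 1 -> Cmod z < 1.
Proof. intros H. rewrite n2_Cmod in H. pose proof (Cmod_ge0 z). nra. Qed.

Lemma deriv_local f g z l r : 0 < r -> (forall w, Cmod (Csub w z) < r -> f w = g w) -> has_cderiv f z l -> has_cderiv g z l.
Proof.
  intros hr E H e he. destruct (H e he) as [d [hd Hd]]. exists (Rmin d r); split. apply Rmin_pos; auto.
  intros w [h1 h2]. rewrite <- !E. apply Hd; split; auto. eapply Rlt_le_trans; [apply h2|apply Rmin_l].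
  rewrite Csub_self, Cmod_zero; auto. rewrite Csub_add. eapply Rlt_le_trans; [apply h2|apply Rmin_r].
Qed.

Lemma ccont_local f g z r : 0 < r -> (forall w, Cmod (Csub w z) < r -> f w = g w) -> ccont f z -> ccont g z.
Proof.
  intros hr E H e he. destruct (H e he) as [d [hd Hd]]. exists (Rmin d r); split. apply Rmin_pos; auto.
  intros w hw. rewrite <- !E. apply Hd. eapply Rlt_le_trans; [apply hw|apply Rmin_l].
  rewrite Csub_self, Cmod_zero; auto. eapply Rlt_le_trans; [apply hw|apply Rmin_r].
Qed.

Definition mden (z1 w : Cplx) := Cadd Cone (Cmul (Cconj z1) w).
Definition mob (z1 w : Cplx) := Cmul (Cadd w z1) (Cinv (mden z1 w)).

Lemma mden_id z1 w : n2 (mden z1 w) - n2 (Cadd w z1) = (1 - n2 w) * (1 - n2 z1).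
Proof. unfold n2, mden; destruct z1, w; cunf; simpl; ring. Qed.

Lemma mden_nz z1 w : n2 z1 < 1 -> n2 w < 1 -> mden z1 w <> Czero.
Proof.
  intros h1 h2 E. pose proof (mden_id z1 w). rewrite E in H.
  replace (n2 Czero) with 0 in H by (unfold n2; cunf; simpl; ring).
  pose proof (n2_ge0 (Cadd w z1)). assert (0 < (1 - n2 w) * (1 - n2 z1)) by (apply Rmult_lt_0_compat; lra). lra.
Qed.

Lemma n2_inv z : z <> Czero -> n2 (Cinv z) = / n2 z.
Proof. intros H. pose proof (Cnz_sq z H). unfold n2; destruct z; cunf; simpl in *. field; auto. Qed.

Lemma mob_n2 z1 w : n2 z1 < 1 -> n2 w < 1 -> n2 (mob z1 w) = 1 - (1 - n2 w) * (1 - n2 z1) / n2 (mden z1 w).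
Proof.
  intros h1 h2. pose proof (mden_nz z1 w h1 h2) as nz. unfold mob. rewrite n2_mul, n2_inv by auto.
  pose proof (mden_id z1 w). assert (0 < n2 (mden z1 w)) by (pose proof (Cnz_sq _ nz); pose proof (n2_ge0 (mden z1 w)); unfold n2 in *; lra).
  replace (n2 (Cadd w z1)) with (n2 (mden z1 w) - (1 - n2 w) * (1 - n2 z1)) by lra. field. lra.
Qed.

Lemma mob_lt1 z1 w : n2 z1 < 1 -> n2 w < 1 -> n2 (mob z1 w) < 1.
Proof.
  intros h1 h2. rewrite mob_n2 by auto. pose proof (mden_nz z1 w h1 h2) as nz.
  assert (0 < n2 (mden z1 w)) by (pose proof (Cnz_sq _ nz); pose proof (n2_ge0 (mden z1 w)); unfold n2 in *; lra).
  assert (0 < (1 - n2 w) * (1 - n2 z1) / n2 (mden z1 w)) by (apply Rdiv_lt_0_compat; auto; apply Rmult_lt_0_compat; lra). lra.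
Qed.

Lemma mob_0 z1 : mob z1 Czero = z1.
Proof. unfold mob, mden; cunf; destruct z1; simpl; apply cext; simpl; field. Qed.

Lemma mob_zero z1 w : n2 z1 < 1 -> n2 w < 1 -> mob z1 w = Czero -> w = Copp z1.
Proof.
  intros h1 h2 E. pose proof (mden_nz z1 w h1 h2) as nz. unfold mob in E.
  assert (Cadd w z1 = Czero).
  { assert (X : Cadd w z1 = Cmul (Cmul (Cadd w z1) (Cinv (mden z1 w))) (mden z1 w)).
    { pose proof (Cnz_sq _ nz). destruct (mden z1 w), w, z1; cunf; simpl in *; apply cext; simpl; field; auto. }
    rewrite X, E. ceq; ring. }
  destruct w, z1; cunf; simpl in *; injection H; intros; apply cext; simpl; lra.
Qed.

Lemma mob_deriv z1 w : n2 z1 < 1 -> n2 w < 1 -> exists l, has_cderiv (mob z1) w l.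
Proof.
  intros h1 h2. eexists. unfold mob. apply deriv_mul.
  - apply (deriv_add (fun w => w) (fun _ => z1)). apply deriv_id. apply deriv_const.
  - apply (deriv_inv (mden z1)). unfold mden. apply (deriv_add (fun _ => Cone) (fun w => Cmul (Cconj z1) w)).
    apply deriv_const. apply (deriv_mul (fun _ => Cconj z1) (fun w => w)). apply deriv_const. apply deriv_id.
    apply mden_nz; auto.
Qed.

Lemma mob_cont z1 w : n2 z1 < 1 -> n2 w < 1 -> ccont (mob z1) w.
Proof. intros h1 h2. destruct (mob_deriv z1 w h1 h2) as [l Hl]. eapply deriv_cont; eauto. Qed.

Lemma mob_lower z1 w : n2 z1 < 1 -> n2 w < 1 ->
  1 - (1 - n2 w) * ((1 + Cmod z1) / (1 - Cmod z1)) <= n2 (mob z1 w).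
Proof.
  intros h1 h2. rewrite mob_n2 by auto. pose proof (mden_nz z1 w h1 h2) as nz.
  set (c := Cmod z1). assert (hc : 0 <= c < 1) by (split; [apply Cmod_ge0|apply n2_lt1_Cmod; auto]).
  assert (hz1 : n2 z1 = c * c) by (apply n2_Cmod).
  assert (hD : (1 - c) * (1 - c) <= n2 (mden z1 w)).
  { rewrite n2_Cmod. assert (1 - c <= Cmod (mden z1 w)).
    { unfold mden. pose proof (Cmod_tri_sub Cone (Copp (Cmul (Cconj z1) w))).
      replace (Csub Cone (Copp (Cmul (Cconj z1) w))) with (Cadd Cone (Cmul (Cconj z1) w)) in H by (ceq; ring).
      rewrite Cmod_opp, Cmod_mul, Cmod_conj, Cmod_one in H. fold c in H.
      assert (Cmod w < 1) by (apply n2_lt1_Cmod; auto). pose proof (Cmod_ge0 w).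
      assert (c * Cmod w <= c) by (rewrite <- (Rmult_1_r c) at 2; apply Rmult_le_compat_l; lra). lra. }
    apply Rmult_le_compat; lra. }
  assert (0 < 1 - c) by lra. pose proof (n2_ge0 w).
  assert ((1 - n2 w) * (1 - c * c) / n2 (mden z1 w) <= (1 - n2 w) * ((1 + c) / (1 - c))).
  { replace ((1 + c) / (1 - c)) with ((1 - c * c) / ((1 - c) * (1 - c))) by (field; lra).
    unfold Rdiv. rewrite !Rmult_assoc. apply Rmult_le_compat_l; [lra|]. apply Rmult_le_compat_l; [nra|].
    apply Rinv_le_contravar; nra. }
  rewrite hz1. lra.
Qed.

Lemma ex_lin2 (f1 f2 : R -> R) v1 v2 a b : ex_RInt f1 a b -> ex_RInt f2 a b -> ex_RInt (fun t => v1 * f1 t + v2 * f2 t) a b.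
Proof.
  intros H1 H2. apply (ex_RInt_plus (V:=R_NormedModule) (fun t => v1 * f1 t) (fun t => v2 * f2 t)).
  apply (ex_RInt_scal (V:=R_NormedModule) f1 a b v1 H1). apply (ex_RInt_scal (V:=R_NormedModule) f2 a b v2 H2).
Qed.

Lemma RInt_lin2 (f1 f2 : R -> R) v1 v2 a b : ex_RInt f1 a b -> ex_RInt f2 a b ->
  RInt (fun t => v1 * f1 t + v2 * f2 t) a b = v1 * RInt f1 a b + v2 * RInt f2 a b.
Proof.
  intros H1 H2. rewrite (RInt_plus (V:=R_CompleteNormedModule) (fun t => v1 * f1 t) (fun t => v2 * f2 t)).
  replace (RInt (fun t => v1 * f1 t) a b) with (v1 * RInt f1 a b) by (symmetry; exact (RInt_scal (V:=R_CompleteNormedModule) f1 a b v1 H1)).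
  replace (RInt (fun t => v2 * f2 t) a b) with (v2 * RInt f2 a b) by (symmetry; exact (RInt_scal (V:=R_CompleteNormedModule) f2 a b v2 H2)).
  reflexivity.
  apply (ex_RInt_scal (V:=R_NormedModule) f1 a b v1 H1). apply (ex_RInt_scal (V:=R_NormedModule) f2 a b v2 H2).
Qed.

Section Sch.
Variable om : Cplx -> Cplx.
Variable psi : Cplx.
Hypothesis Hmap : forall z, Cmod z < 1 -> Cmod (om z) < 1.
Hypothesis Hder : forall z, Cmod z < 1 -> exists l, has_cderiv om z l.
Hypothesis H0 : om Czero = Czero.
Hypothesis Hd0 : has_cderiv om Czero psi.

Definition g0 z := if Ceq_dec z Czero then psi else Cmul (om z) (Cinv z).

Lemma g0_cont0 : ccont g0 Czero.
Proof.
  intros e he. destruct (Hd0 e he) as [d [hd Hd]]. exists d; split; auto. intros w Hw.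
  unfold g0. destruct (Ceq_dec Czero Czero) as [_|c]; [|contradiction].
  destruct (Ceq_dec w Czero) as [->|n].
  - rewrite Csub_self, Cmod_zero; auto.
  - replace (Csub w Czero) with w in Hw by (ceq; ring).
    specialize (Hd w (conj (Cmod_pos _ n) Hw)). replace (Cadd Czero w) with w in Hd by (ceq; ring).
    rewrite H0 in Hd. replace (Csub (om w) Czero) with (om w) in Hd by (ceq; ring). unfold Cdiv in Hd. auto.
Qed.

Lemma g0_eq z : z <> Czero -> g0 z = Cmul (om z) (Cinv z).
Proof. intros n; unfold g0; destruct (Ceq_dec z Czero); [contradiction|auto]. Qed.

Lemma g0_deriv z : Cmod z < 1 -> z <> Czero -> exists l, has_cderiv g0 z l.
Proof.
  intros hz n. destruct (Hder z hz) as [l Hl]. eexists.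
  apply (deriv_local (fun w => Cmul (om w) (Cinv w)) g0 z _ (Cmod z)). apply Cmod_pos; auto.
  { intros w hw. rewrite g0_eq; auto. intros E. rewrite E in hw. replace (Csub Czero z) with (Copp z) in hw by (ceq; ring).
    rewrite Cmod_opp in hw; lra. }
  apply deriv_mul; eauto. apply (deriv_inv (fun w => w)); auto. apply deriv_id.
Qed.

Lemma g0_ccont z : Cmod z < 1 -> ccont g0 z.
Proof.
  intros hz. destruct (Ceq_dec z Czero) as [->|n]. apply g0_cont0.
  destruct (g0_deriv z hz n) as [l Hl]. eapply deriv_cont; eauto.
Qed.

Lemma g0_n2 z : z <> Czero -> n2 (g0 z) * n2 z = n2 (om z).
Proof.
  intros n. rewrite g0_eq by auto. rewrite n2_mul, n2_inv by auto. pose proof (Cnz_sq z n). unfold n2 at 2 3. field. auto.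
Qed.

Lemma PI_pos2 : 0 < PI.
Proof. apply PI_RGT_0. Qed.

Theorem schwarz z1 : Cmod z1 < 1 -> n2 (g0 z1) <= 1.
Proof.
  intros hz1. set (c := Cmod z1). assert (hc : 0 <= c < 1) by (split; [apply Cmod_ge0|auto]).
  assert (n21 : n2 z1 < 1) by (apply Cmod_lt1_n2; auto).
  set (G := fun w => g0 (mob z1 w)).
  assert (HC : forall w, Cmod w < 1 -> ccont G w).
  { intros w hw. unfold G. apply ccont_comp. apply mob_cont; auto. apply Cmod_lt1_n2; auto.
    apply g0_ccont. apply n2_lt1_Cmod. apply mob_lt1; auto. apply Cmod_lt1_n2; auto. }
  assert (HD : forall w, Cmod w < 1 -> w <> Czero -> w <> Copp z1 -> exists l, has_cderiv G w l).
  { intros w hw _ hw2. assert (n2w : n2 w < 1) by (apply Cmod_lt1_n2; auto).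
    destruct (mob_deriv z1 w n21 n2w) as [l1 Hl1].
    assert (nz : mob z1 w <> Czero) by (intros E; apply hw2; apply mob_zero; auto).
    destruct (g0_deriv (mob z1 w)) as [l2 Hl2]; auto. apply n2_lt1_Cmod, mob_lt1; auto.
    eexists. unfold G. apply deriv_comp; eauto. }
  set (v := g0 z1).
  set (K := (1 + c) / (1 - c)).
  assert (hK : 0 < K) by (unfold K; apply Rdiv_lt_0_compat; lra).
  destruct (Rle_dec (n2 v) 1) as [ok|nok]; auto. exfalso. apply Rnot_le_lt in nok.
  set (eta := (1 - / n2 v) / K).
  assert (heta : 0 < eta).
  { unfold eta. apply Rdiv_lt_0_compat; auto. assert (/ n2 v < 1). { rewrite <- Rinv_1. apply Rinv_lt_contravar; lra. } lra. }
  set (r := Rmax ((1 + c) / 2) (1 - eta / 4)).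
  assert (hr : c < r < 1).
  { unfold r. split. eapply Rlt_le_trans; [|apply Rmax_l]; lra. apply Rmax_lub_lt; lra. }
  assert (hr2 : (1 - r * r) < eta) by (unfold r in *; pose proof (Rmax_r ((1 + c) / 2) (1 - eta / 4)); nra).
  set (L := 1 - (1 - r * r) * K).
  assert (hL : / n2 v < L).
  { unfold L. assert ((1 - r * r) * K < eta * K) by (apply Rmult_lt_compat_r; auto). assert (eta * K = 1 - / n2 v) by (unfold eta; field; lra). lra. }
  assert (hL0 : 0 < L) by (pose proof (Rinv_0_lt_compat (n2 v) ltac:(lra)); lra).
  set (M := / L).
  assert (hM : M < n2 v).
  { unfold M. replace (n2 v) with (/ / n2 v) by (field; lra). apply Rinv_lt_contravar; auto. apply Rmult_lt_0_compat; auto.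
    apply Rinv_0_lt_compat; lra. }
  assert (Hpt : forall t, n2 (G (P r t)) <= M).
  { intros t. assert (hP : Cmod (P r t) = r) by (apply Cmod_P; lra).
    assert (n2P : n2 (P r t) < 1) by (apply Cmod_lt1_n2; lra).
    assert (nz : mob z1 (P r t) <> Czero).
    { intros E. apply mob_zero in E; auto. rewrite E, Cmod_opp in hP. fold c in hP. lra. }
    pose proof (g0_n2 _ nz) as E. fold (G (P r t)) in E.
    assert (hm : n2 (om (mob z1 (P r t))) < 1). { apply Cmod_lt1_n2, Hmap, n2_lt1_Cmod, mob_lt1; auto. }
    pose proof (mob_lower z1 (P r t) n21 n2P). rewrite n2_Cmod, hP in H. fold c K in H. fold L in H.
    pose proof (n2_ge0 (G (P r t))).
    unfold M. apply Rmult_le_reg_r with L; auto. rewrite Rinv_l by lra.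
    rewrite n2_Cmod in E. rewrite <- n2_Cmod in E. nra. }
  assert (hr0 : 0 < r < 1) by lra.
  pose proof (mv true G (Copp z1) HC HD r hr0) as M1. pose proof (mv false G (Copp z1) HC HD r hr0) as M2.
  unfold Phi, pr in M1, M2. simpl in M1, M2. unfold G at 2 in M1. unfold G at 2 in M2. rewrite mob_0 in M1, M2. fold v in M1, M2.
  pose proof (ex_Phi true G HC r ltac:(lra)) as E1. pose proof (ex_Phi false G HC r ltac:(lra)) as E2.
  unfold pr in E1, E2; simpl in E1, E2.
  assert (I : RInt (fun t => fst v * fst (G (P r t)) + snd v * snd (G (P r t))) 0 (2 * PI) = 2 * PI * n2 v).
  { rewrite RInt_lin2 by auto. rewrite M1, M2. unfold n2, Re, Im.
    change (fst v * (2 * PI * fst v) + snd v * (2 * PI * snd v) = 2 * PI * (fst v * fst v + snd v * snd v) :> R). ring. }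
  assert (J : RInt (fun t => fst v * fst (G (P r t)) + snd v * snd (G (P r t))) 0 (2 * PI) <= RInt (fun _ => (n2 v + M) / 2) 0 (2 * PI)).
  { apply RInt_le. pose proof PI_pos2; lra. apply ex_lin2; auto. apply ex_RInt_const.
    intros t _. specialize (Hpt t). unfold n2, Re, Im in *. destruct (G (P r t)) as [x y]. simpl in *.
    pose proof (pow2_ge_0 (fst v - x)); pose proof (pow2_ge_0 (snd v - y)). nra. }
  rewrite RInt_const in J. unfold scal in J; simpl in J; unfold mult in J; simpl in J. rewrite I in J.
  pose proof PI_pos2. nra.
Qed.

End Sch.

Lemma zero_int (f : R -> R) a b : a < b -> (forall t, a <= t <= b -> continuous f t) -> (forall t, a <= t <= b -> 0 <= f t) ->
  RInt f a b = 0 -> f a = 0.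
Proof.
  intros hab Hc Hp Hi. destruct (Hp a ltac:(lra)) as [h|h]; [|auto]. exfalso.
  pose proof (Hc a ltac:(lra)) as Ca. apply continuity_pt_filterlim in Ca.
  destruct (Ca (f a / 2)) as [d [hd Hd]]. lra.
  set (c := Rmin (a + d / 2) b).
  assert (hc : a < c <= b) by (unfold c; split; [apply Rmin_glb_lt; lra|apply Rmin_r]).
  assert (ex : forall x y, a <= x -> x <= y -> y <= b -> ex_RInt f x y).
  { intros x y h1 h2 h3. apply (@ex_RInt_continuous R_CompleteNormedModule). intros z hz.
    rewrite Rmin_left, Rmax_right in hz by lra. apply Hc; lra. }
  rewrite (RInt_split f a c b) in Hi by (apply ex; lra).
  assert (I1 : RInt (fun _ => f a / 2) a c <= RInt f a c).
  { apply RInt_le. lra. apply ex_RInt_const. apply ex; lra. intros x hx.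
    assert (Rabs (f x - f a) < f a / 2).
    { apply (Hd x). split. unfold D_x, no_cond; split; auto; lra. unfold R_dist; simpl; unfold R_dist.
      apply Rabs_lt_between'. unfold c in hx. pose proof (Rmin_l (a + d/2) b). lra. }
    apply Rabs_lt_between' in H. lra. }
  rewrite RInt_const in I1. unfold scal in I1; simpl in I1; unfold mult in I1; simpl in I1.
  assert (I2 : 0 <= RInt f c b). { apply RInt_ge_0. lra. apply ex; lra. intros x hx; apply Hp; lra. }
  assert (0 < (c - a) * (f a / 2)) by (apply Rmult_lt_0_compat; lra). lra.
Qed.

Section Rig.
Variable om : Cplx -> Cplx.
Variable psi : Cplx.
Hypothesis Hmap : forall z, Cmod z < 1 -> Cmod (om z) < 1.
Hypothesis Hder : forall z, Cmod z < 1 -> exists l, has_cderiv om z l.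
Hypothesis H0 : om Czero = Czero.
Hypothesis Hd0 : has_cderiv om Czero psi.
Hypothesis Hpsi : n2 psi = 1.

Theorem rigid z : Cmod z < 1 -> om z = Cmul psi z.
Proof.
  intros hz. destruct (Ceq_dec z Czero) as [->|nz].
  { rewrite H0. ceq; ring. }
  set (rho := Cmod z). assert (hrho : 0 < rho) by (apply Cmod_pos; auto).
  set (u := Cmul z (RtoC (/ rho))).
  assert (hu : Cmod u = 1) by (unfold u; rewrite Cmod_mul, Cmod_RtoC, Rabs_right; [fold rho; field; lra| left; apply Rinv_0_lt_compat; lra]).
  assert (Cu : forall w, Cmod (Cmul u w) = Cmod w) by (intros; rewrite Cmod_mul, hu; ring).
  set (g := g0 om psi).
  set (F := fun w => g (Cmul u w)).
  assert (HC : forall w, Cmod w < 1 -> ccont F w).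
  { intros w hw. unfold F. apply (ccont_comp g (fun w => Cmul u w)). apply ccont_mul. apply ccont_const. apply ccont_id.
    apply g0_ccont; auto. rewrite Cu; auto. }
  assert (HD : forall w, Cmod w < 1 -> w <> Czero -> w <> Czero -> exists l, has_cderiv F w l).
  { intros w hw n _. assert (nw : Cmul u w <> Czero).
    { intros E. apply (f_equal Cmod) in E. rewrite Cu, Cmod_zero in E. apply n. apply Cmod_eq0; auto. }
    destruct (g0_deriv om psi Hder (Cmul u w)) as [l Hl]; auto. rewrite Cu; auto.
    eexists. unfold F. apply deriv_comp; eauto. apply (deriv_mul (fun _ => u) (fun w => w)). apply deriv_const. apply deriv_id. }
  assert (hr : 0 < rho < 1) by (split; auto).
  pose proof (mv true F Czero HC HD rho hr) as M1. pose proof (mv false F Czero HC HD rho hr) as M2.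
  unfold Phi, pr in M1, M2; simpl in M1, M2.
  assert (F0 : F Czero = psi).
  { unfold F, g, g0. replace (Cmul u Czero) with Czero by (ceq; ring). destruct (Ceq_dec Czero Czero); [auto|contradiction]. }
  rewrite F0 in M1, M2.
  pose proof (ex_Phi true F HC rho ltac:(lra)) as E1. pose proof (ex_Phi false F HC rho ltac:(lra)) as E2.
  unfold pr in E1, E2; simpl in E1, E2.
  set (q := fun t => 1 - (fst psi * fst (F (P rho t)) + snd psi * snd (F (P rho t)))).
  assert (Hq : forall t, 0 <= q t).
  { intros t. unfold q. assert (hF : n2 (F (P rho t)) <= 1).
    { unfold F, g. apply schwarz; auto. rewrite Cu, Cmod_P; lra. }
    unfold n2, Re, Im in *. destruct (F (P rho t)) as [x y]; simpl in *.
    pose proof (pow2_ge_0 (fst psi - x)); pose proof (pow2_ge_0 (snd psi - y)). nra. }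
  assert (Iq : RInt q 0 (2 * PI) = 0).
  { unfold q. change (fun t => 1 - (fst psi * fst (F (P rho t)) + snd psi * snd (F (P rho t))))
      with (fun t => minus ((fun _ => 1) t) ((fun t => fst psi * fst (F (P rho t)) + snd psi * snd (F (P rho t))) t)).
    rewrite (RInt_minus (V:=R_CompleteNormedModule)). rewrite RInt_lin2 by auto. rewrite M1, M2, RInt_const.
    unfold minus, plus, opp, scal, mult; simpl. unfold n2, Re, Im in Hpsi.
    change ((2 * PI - 0) * 1 + - (fst psi * (2 * PI * fst psi) + snd psi * (2 * PI * snd psi)) = 0 :> R).
    replace (fst psi * (2 * PI * fst psi) + snd psi * (2 * PI * snd psi)) with (2 * PI * (fst psi * fst psi + snd psi * snd psi)) by ring.
    rewrite Hpsi. ring.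
    apply ex_RInt_const. apply ex_lin2; auto. }
  assert (Cq : forall t, 0 <= t <= 2 * PI -> continuous q t).
  { intros t ht. unfold q.
    assert (pc : pcont (fun t => F (P rho t)) t) by (apply (pcont_comp F (fun t => P rho t)); [apply pcont_arc|apply HC; rewrite Cmod_P; lra]).
    apply (continuous_minus (V:=R_NormedModule) (fun _ => 1)). apply continuous_const.
    apply (continuous_plus (V:=R_NormedModule)).
    apply (continuous_scal_r (K:=R_AbsRing) (V:=R_NormedModule) (fst psi) (fun t => fst (F (P rho t)))). apply pcont_fst; auto.
    apply (continuous_scal_r (K:=R_AbsRing) (V:=R_NormedModule) (snd psi) (fun t => snd (F (P rho t)))). apply pcont_snd; auto. }
  pose proof (zero_int q 0 (2 * PI) ltac:(pose proof PI_pos2; lra) Cq (fun t _ => Hq t) Iq) as Z.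
  unfold q in Z.
  assert (Pz : Cmul u (P rho 0) = z).
  { unfold u, P. rewrite cos_0, sin_0. destruct z as [z1 z2]. cunf; simpl; apply cext; simpl; field; lra. }
  unfold F in Z. rewrite Pz in Z.
  assert (hg : n2 (g z) <= 1) by (unfold g; apply schwarz; auto).
  assert (gz : g z = psi).
  { unfold n2, Re, Im in *. destruct (g z) as [x y]; simpl in *.
    assert ((fst psi - x) * (fst psi - x) + (snd psi - y) * (snd psi - y) <= 0) by nra.
    pose proof (pow2_ge_0 (fst psi - x)); pose proof (pow2_ge_0 (snd psi - y)). simpl in *.
    assert (h1 : (fst psi - x) * (fst psi - x) = 0) by nra.
    assert (h2 : (snd psi - y) * (snd psi - y) = 0) by nra.
    apply Rmult_integral in h1; apply Rmult_integral in h2.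
    apply cext; simpl; destruct h1, h2; lra. }
  unfold g in gz. rewrite g0_eq in gz by auto.
  assert (om z = Cmul (Cmul (om z) (Cinv z)) z).
  { pose proof (Cnz_sq z nz). destruct (om z), z; cunf; simpl in *; apply cext; simpl; field; auto. }
  rewrite H, gz. ceq; ring.
Qed.

End Rig.

Lemma Cring_th : ring_theory Czero Cone Cadd Cmul Csub Copp (@eq Cplx).
Proof.
  constructor; intros; ceq; ring.
Qed.
Add Ring Cring : Cring_th.

Lemma Cconj_mul_self S : n2 S = 1 -> Cmul (Cconj S) S = Cone.
Proof. intros H. unfold n2, Re, Im in H. ceq; nra. Qed.

Lemma deriv_eq f z l l' : has_cderiv f z l -> l = l' -> has_cderiv f z l'.
Proof. intros H ->; auto. Qed.

Lemma test (x y : Cplx) : Cmul (Cadd x y) (Cadd x y) = Cadd (Cmul x x) (Cadd (Cmul (RtoC 2) (Cmul x y)) (Cmul y y)).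
Proof. replace (RtoC 2) with (Cadd Cone Cone) by (ceq; ring). ring. Qed.

Lemma r0_bounds a : Cmod a < 1 -> 0 < Cmod (Cadd Cone a) < 2.
Proof.
  intros ha. split.
  - pose proof (Cmod_tri_sub Cone (Copp a)). replace (Csub Cone (Copp a)) with (Cadd Cone a) in H by (ceq; ring).
    rewrite Cmod_one, Cmod_opp in H. lra.
  - pose proof (Cmod_tri Cone a). rewrite Cmod_one in H. lra.
Qed.

Lemma Cmod_ega a : Cmod a < 1 -> Cmod (expi_gamma_a a) = 1.
Proof.
  intros ha. unfold expi_gamma_a.
  assert (E : Cadd Cone (Cconj a) = Cconj (Cadd Cone a)) by (ceq; ring).
  rewrite E, Cmod_conj. pose proof (r0_bounds a ha).
  assert (nz : RtoC (Cmod (Cadd Cone a)) <> Czero) by (intros h; injection h; lra).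
  rewrite Cmod_div by auto. rewrite Cmod_conj, Cmod_RtoC, Rabs_right by lra. field; lra.
Qed.

Lemma phi_eq a gamma : Cmod a < 1 ->
  Cdiv (Cexpi gamma) (Cadd Cone a) = Cmul (RtoC (/ Cmod (Cadd Cone a))) (Cmul (Cexpi gamma) (expi_gamma_a a)).
Proof.
  intros ha. pose proof (r0_bounds a ha) as hr. unfold expi_gamma_a.
  assert (E : Cadd Cone (Cconj a) = Cconj (Cadd Cone a)) by (ceq; ring).
  rewrite E, Cmod_conj. set (r := Cmod (Cadd Cone a)) in *.
  pose proof (Cmod_sq (Cadd Cone a)) as S. fold r in S.
  destruct a as [a1 a2]. unfold Cdiv, Cinv, Cexpi in *; cunf; simpl in *.
  rewrite <- S. apply cext; simpl; field; lra.
Qed.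

Theorem proposition1 (a : Cplx) (gamma : R) (h h' g g' : Cplx -> Cplx) :
  inD a -> 0 <= gamma < 2 * PI ->
  in_SH h h' g g' ->
  maps_onto_Hag h g a gamma ->
  g' Czero = Cmul (RtoC (aprime a))
             (Cmul (Cmul (Cexpi gamma) (expi_gamma_a a))
                   (Cmul (Cexpi gamma) (expi_gamma_a a))) ->
  (-1 < aprime a < 1) /\ Cmod (g' Czero) < 1 /\
  forall z, inD z ->
    Cadd (h z)
         (Cmul (Cconj (Cmul (Cmul (Cexpi gamma) (expi_gamma_a a))
                            (Cmul (Cexpi gamma) (expi_gamma_a a))))
               (g z))
    = Cdiv (Cmul (RtoC (1 + aprime a)) z)
           (Csub Cone (Cmul (Cmul (Cexpi gamma) (expi_gamma_a a)) z)).
Proof.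
  intros Ha Hgam HSH Honto Hg0.
  destruct HSH as (Hh & Hg & h0 & g00 & h'0 & _ & _).
  unfold inD in *.
  set (S := Cmul (Cexpi gamma) (expi_gamma_a a)) in *.
  assert (CS : Cmod S = 1) by (unfold S; rewrite Cmod_mul, Cmod_expi, Cmod_ega; auto; ring).
  assert (hS : n2 S = 1) by (rewrite n2_Cmod, CS; ring).
  pose proof (r0_bounds a Ha) as hr. set (r0 := Cmod (Cadd Cone a)) in *.
  assert (ha' : aprime a = r0 - 1) by reflexivity.
  split; [rewrite ha'; lra|].
  split.
  { rewrite Hg0, !Cmod_mul, Cmod_RtoC, CS. rewrite ha', !Rmult_1_r. apply Rabs_def1; lra. }
  set (phi := Cdiv (Cexpi gamma) (Cadd Cone a)).
  assert (Ephi : phi = Cmul (RtoC (/ r0)) S) by (apply phi_eq; auto).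
  set (k := fun z => Cadd (Cmul phi (h z)) (Cmul (Cconj phi) (g z))).
  assert (Hk : forall z, Cmod z < 1 -> - (1/2) < Re (k z)).
  { intros z hz. destruct (Honto (harm h g z)) as [H1 _]. specialize (H1 (ex_intro _ z (conj hz eq_refl))).
    unfold in_Hag in H1. fold phi in H1.
    replace (Re (k z)) with (Re (Cmul phi (harm h g z))) by (unfold k, harm; cunf; simpl; ring). lra. }
  assert (Hk1 : forall z, Cmod z < 1 -> Cadd Cone (k z) <> Czero).
  { intros z hz E. specialize (Hk z hz). apply (f_equal Re) in E. cunf; simpl in *. lra. }
  assert (Hkd : forall z, Cmod z < 1 -> has_cderiv k z (Cadd (Cmul phi (h' z)) (Cmul (Cconj phi) (g' z)))).
  { intros z hz. eapply deriv_eq. unfold k. apply deriv_add; apply (deriv_mul (fun _ => _)); try apply deriv_const; auto.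
    ring. }
  set (om := fun z => Cmul (k z) (Cinv (Cadd Cone (k z)))).
  assert (Hmap : forall z, Cmod z < 1 -> Cmod (om z) < 1).
  { intros z hz. apply n2_lt1_Cmod. unfold om. rewrite n2_mul, n2_inv by auto.
    specialize (Hk z hz). pose proof (Hk1 z hz) as nz.
    assert (n2 (Cadd Cone (k z)) = n2 (k z) + 1 + 2 * Re (k z)) by (unfold n2; cunf; simpl; ring).
    assert (0 < n2 (Cadd Cone (k z))) by (pose proof (Cnz_sq _ nz); pose proof (n2_ge0 (Cadd Cone (k z))); unfold n2 in *; lra).
    apply Rmult_lt_reg_r with (n2 (Cadd Cone (k z))); auto. rewrite Rmult_assoc, Rinv_l by lra. lra. }
  assert (Hkd1 : forall z, Cmod z < 1 -> has_cderiv (fun w => Cadd Cone (k w)) z (Cadd Czero (Cadd (Cmul phi (h' z)) (Cmul (Cconj phi) (g' z))))).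
  { intros z hz. apply (deriv_add (fun _ => Cone)). apply deriv_const. auto. }
  assert (Hder : forall z, Cmod z < 1 -> exists l, has_cderiv om z l).
  { intros z hz. eexists. unfold om. apply deriv_mul. auto. apply (deriv_inv (fun w => Cadd Cone (k w))); auto. }
  assert (k0 : k Czero = Czero) by (unfold k; rewrite h0, g00; ceq; ring).
  assert (H0 : om Czero = Czero) by (unfold om; rewrite k0; ceq; ring).
  assert (z0 : Cmod Czero < 1) by (rewrite Cmod_zero; lra).
  assert (Hd0 : has_cderiv om Czero S).
  { eapply deriv_eq. unfold om. apply deriv_mul. apply Hkd; auto. apply (deriv_inv (fun w => Cadd Cone (k w))); auto.
    rewrite k0, h'0, Hg0, ha', Ephi.
    replace (Cinv (Cadd Cone Czero)) with Cone by (ceq; field).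
    replace (Cconj (Cmul (RtoC (/ r0)) S)) with (Cmul (RtoC (/ r0)) (Cconj S)) by (ceq; ring).
    cbv beta. rewrite k0. replace (Cinv (Cadd Cone Czero)) with Cone by (ceq; field). match goal with |- ?L = _ => transitivity (Cadd (Cmul (RtoC (/ r0)) S) (Cmul (Cmul (RtoC (/ r0)) (RtoC (r0 - 1))) (Cmul (Cmul (Cconj S) S) S))); [ring|] end.
    rewrite Cconj_mul_self by auto.
    transitivity (Cmul (Cadd (RtoC (/ r0)) (Cmul (RtoC (/ r0)) (RtoC (r0 - 1)))) S); [ring|].
    replace (Cadd (RtoC (/ r0)) (Cmul (RtoC (/ r0)) (RtoC (r0 - 1)))) with Cone by (unfold RtoC, Cone, Cadd, Cmul, Re, Im; simpl; apply cext; simpl; field; lra).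
    ring. }
  pose proof (rigid om S Hmap Hder H0 Hd0 hS) as R.
  intros z hz. specialize (R z hz).
  set (D := Csub Cone (Cmul S z)).
  assert (nD : D <> Czero).
  { intros E. assert (Cmul S z = Cone) by (unfold D in E; apply Csub_eq0 in E; auto).
    apply (f_equal Cmod) in H. rewrite Cmod_mul, CS, Cmod_one in H. lra. }
  assert (kD : Cmul (k z) D = Cmul S z).
  { assert (Ek : k z = Cmul (om z) (Cadd Cone (k z))).
    { unfold om. pose proof (Hk1 z hz) as nz. replace (Cmul (Cmul (k z) (Cinv (Cadd Cone (k z)))) (Cadd Cone (k z)))
        with (Cmul (k z) (Cmul (Cinv (Cadd Cone (k z))) (Cadd Cone (k z)))) by ring. rewrite Cinv_l by auto. ring. }
    rewrite R in Ek. unfold D. rewrite Ek at 1. 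
    replace (Cmul (Cmul (Cmul S z) (Cadd Cone (k z))) (Csub Cone (Cmul S z))) with (Cadd (Cmul S z) (Csub (Cmul (Cmul S z) (k z)) (Cmul (Cmul (Cmul S z) (Cadd Cone (k z))) (Cmul S z)))) by ring.
    rewrite <- Ek. ring. }
  assert (EL : Cadd (h z) (Cmul (Cconj (Cmul S S)) (g z)) = Cmul (Cmul (RtoC r0) (Cconj S)) (k z)).
  { unfold k. rewrite Ephi. replace (Cconj (Cmul (RtoC (/ r0)) S)) with (Cmul (RtoC (/ r0)) (Cconj S)) by (ceq; ring).
    replace (Cconj (Cmul S S)) with (Cmul (Cconj S) (Cconj S)) by (ceq; ring).
    replace (Cmul (Cmul (RtoC r0) (Cconj S)) (Cadd (Cmul (Cmul (RtoC (/ r0)) S) (h z)) (Cmul (Cmul (RtoC (/ r0)) (Cconj S)) (g z))))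
      with (Cmul (Cmul (RtoC r0) (RtoC (/ r0))) (Cadd (Cmul (Cmul (Cconj S) S) (h z)) (Cmul (Cmul (Cconj S) (Cconj S)) (g z)))) by ring.
    rewrite Cconj_mul_self by auto. replace (Cmul (RtoC r0) (RtoC (/ r0))) with Cone by (ceq; field; lra). ring. }
  rewrite EL. unfold Cdiv. rewrite ha'. replace (1 + (r0 - 1)) with r0 by ring.
  replace (Cmul (Cmul (RtoC r0) (Cconj S)) (k z)) with (Cmul (Cmul (RtoC r0) (Cconj S)) (Cmul (Cmul (k z) D) (Cinv D))).
  2: { replace (Cmul (Cmul (k z) D) (Cinv D)) with (Cmul (k z) (Cmul D (Cinv D))) by ring. rewrite Cinv_r by auto. ring. }
  rewrite kD. fold D. replace (Cmul (Cmul (RtoC r0) (Cconj S)) (Cmul (Cmul S z) (Cinv D))) with (Cmul (Cmul (RtoC r0) (Cmul (Cconj S) S)) (Cmul z (Cinv D))) by ring.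
  rewrite Cconj_mul_self by auto. ring.
Qed.
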